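(* Let $g$ solve system (S3) with initial data $h_{ii}>0$, $h_{11}\le h_{22}\le h_{33}$, and suppose $h\in D_S$, i.e. the solution of the planar system (P) starting at $(b_0,c_0)=(h_{00}^{1/3}h_{22},h_{00}^{1/3}h_{33})$ converges to $P_1$. Then the solution exists for all $t\ge 0$ and as $t\to\infty$: $g_{00}\to0$; $g_{11},g_{22},g_{33}\to\infty$; $g_{22}/g_{11}\to4$ and $g_{22}/g_{33}\to1$.
   Context: Let $\det h = h_{00}h_{11}h_{22}h_{33}$, $\beta=\frac{1}{6(\det h)^2}$, $p(x,y,z) = x^4 - x^3(y+z) + x^2yz + x(-y^3+y^2z+yz^2-z^3) + y^4 - y^3z - yz^3 + z^4$, $q(x,y,z) = 5x^4 - 3x^3(y+z) + x^2yz + x(y^3-y^2z-yz^2+z^3) - 3y^4 + 3y^3z + 3yz^3 - 3z^4$, $r(x,y,z) = \tfrac12(p+3q)(x,y,z) = 8x^4-5x^3(y+z)+2x^2yz+x(y^3-y^2z-yz^2+z^3)-4y^4+4y^3z+4yz^3-4z^4$. System (S3): $\dot g_{00} = -\beta\,p(g_{11},g_{22},g_{33})\,g_{00}^3$, $\dot g_{11} = -\beta\,q(g_{11},g_{22},g_{33})\,g_{00}^2g_{11}$, $\dot g_{22} = -\beta\,q(g_{22},g_{33},g_{11})\,g_{00}^2g_{22}$, $\dot g_{33} = -\beta\,q(g_{33},g_{11},g_{22})\,g_{00}^2g_{33}$, $g_{ii}(0)=h_{ii}$ (Bach flow on $\mathbb{R}\times\mathbb{S}^3$ in a diagonalizing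 frame; $g_{00}g_{11}g_{22}g_{33}=\det h$ is preserved). Set $a=g_{00}^{1/3}g_{11}$, $b=g_{00}^{1/3}g_{22}$, $c=g_{00}^{1/3}g_{33}$, so $abc=\det h$. Under (S3), $(b,c)$ follows, up to a time reparametrization, the planar system (P): $\dot b=-\tfrac23 r(b,a,c)\,b$, $\dot c=-\tfrac23 r(c,a,b)\,c$ with $a=\det h/(bc)$, on the region $a\le b\le c$. $P_0$ is the point $b=c=(\det h)^{1/3}$ (where $a=b=c$), and $P_1$ is the point $b=c=(4\det h)^{1/3}$ (where $4a=b=c$). $D_S$ is the set of initial metrics whose (P)-trajectory converges to $P_1$ (the stable manifold of the saddle $P_1$); $D_\infty$ the set whose (P)-trajectory has $b,c\to\infty$; $D_{L_0}$ the set whose (P)-trajectory converges to $P_0$. *)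

(* Defs.v *)
From Stdlib Require Import Reals Lra.
Open Scope R_scope.

Definition pp (x y z : R) : R :=
  x^4 - x^3*(y+z) + x^2*y*z + x*(-y^3 + y^2*z + y*z^2 - z^3)
  + y^4 - y^3*z - y*z^3 + z^4.

Definition qq (x y z : R) : R :=
  5*x^4 - 3*x^3*(y+z) + x^2*y*z + x*(y^3 - y^2*z - y*z^2 + z^3)
  - 3*y^4 + 3*y^3*z + 3*y*z^3 - 3*z^4.

Definition rr (x y z : R) : R := (pp x y z + 3 * qq x y z) / 2.

Definition tends_to_at_infty (f : R -> R) (l : R) : Prop :=
  forall eps, 0 < eps -> exists T, forall t, T <= t -> Rabs (f t - l) < eps.

Definition tends_to_infty (f : R -> R) : Prop :=
  forall M, exists T, forall t, T <= t -> M < f t.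

Definition right_cont_at0 (f : R -> R) : Prop :=
  forall eps, 0 < eps -> exists delta, 0 < delta /\
    forall t, 0 <= t < delta -> Rabs (f t - f 0) < eps.

Definition S3_global_solution (h0 h1 h2 h3 : R) (g0 g1 g2 g3 : R -> R) : Prop :=
  let deth := h0 * h1 * h2 * h3 in
  let beta := 1 / (6 * deth ^ 2) in
  g0 0 = h0 /\ g1 0 = h1 /\ g2 0 = h2 /\ g3 0 = h3 /\
  right_cont_at0 g0 /\ right_cont_at0 g1 /\ right_cont_at0 g2 /\ right_cont_at0 g3 /\
  forall t, 0 < t ->
    derivable_pt_lim g0 t (- beta * pp (g1 t) (g2 t) (g3 t) * (g0 t)^3) /\
    derivable_pt_lim g1 t (- beta * qq (g1 t) (g2 t) (g3 t) * (g0 t)^2 * g1 t) /\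
    derivable_pt_lim g2 t (- beta * qq (g2 t) (g3 t) (g1 t) * (g0 t)^2 * g2 t) /\
    derivable_pt_lim g3 t (- beta * qq (g3 t) (g1 t) (g2 t) * (g0 t)^2 * g3 t).

(* (b,c) solves the planar system (P) (with a = deth/(b c)) on [0,+infinity),
   staying in the positive quadrant, with initial value (b0,c0). *)
Definition P_global_solution (deth b0 c0 : R) (b c : R -> R) : Prop :=
  b 0 = b0 /\ c 0 = c0 /\ right_cont_at0 b /\ right_cont_at0 c /\
  (forall t, 0 <= t -> 0 < b t /\ 0 < c t) /\
  forall t, 0 < t ->
    derivable_pt_lim b t (- (2/3) * rr (b t) (deth / (b t * c t)) (c t) * b t) /\
    derivable_pt_lim c t (- (2/3) * rr (c t) (deth / (b t * c t)) (b t) * c t).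

(* h in D_S: the (P)-trajectory from (h0^(1/3) h2, h0^(1/3) h3) converges to
   P1 = ((4 deth)^(1/3), (4 deth)^(1/3)). *)
Definition in_D_S (h0 h1 h2 h3 : R) : Prop :=
  let deth := h0 * h1 * h2 * h3 in
  exists b c : R -> R,
    P_global_solution deth (Rpower h0 (1/3) * h2) (Rpower h0 (1/3) * h3) b c /\
    tends_to_at_infty b (Rpower (4 * deth) (1/3)) /\
    tends_to_at_infty c (Rpower (4 * deth) (1/3)).

(* Main.v *)
Require Import Defs.
From Stdlib Require Import Reals Lra Psatz.
From Coquelicot Require Import Coquelicot.
From Stdlib Require Import ClassicalEpsilon Ranalysis5.
Open Scope R_scope.

Lemma prim (k : R -> R) : continuity k -> exists K, K 0 = 0 /\ forall t, derivable_pt_lim K t (k t).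
Proof.
  intros Hk. exists (fun t => RInt k 0 t). split.
  - rewrite RInt_point; reflexivity.
  - intros t. apply is_derive_Reals. apply (is_derive_RInt k (fun t => RInt k 0 t) 0).
    + exists (mkposreal 1 Rlt_0_1). intros y _. refine (RInt_correct (V:=R_CompleteNormedModule) k 0 y _).
      apply ex_RInt_continuous. intros z _. apply continuity_pt_filterlim. apply Hk.
    + apply continuity_pt_filterlim. apply Hk.
Qed.

Lemma cont_eps f x : (forall eps, 0 < eps -> exists d, 0 < d /\ forall y, Rabs (y - x) < d -> Rabs (f y - f x) < eps) -> continuity_pt f x.
Proof.
  intros H eps Heps. destruct (H eps Heps) as [d [Hd Hy]]. exists d. split; [lra|].
  intros y [_ Hy']. apply Hy. exact Hy'.
Qed.

Lemma eps_cont f x : continuity_pt f x -> forall eps, 0 < eps -> exists d, 0 < d /\ forall y, Rabs (y - x) < d -> Rabs (f y - f x) < eps.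
Proof.
  intros H eps Heps. destruct (H eps Heps) as [d [Hd Hy]]. exists d. split; [lra|].
  intros y Hy'. destruct (Req_dec y x) as [->|Hne].
  - unfold Rminus; rewrite Rplus_opp_r, Rabs_R0; lra.
  - apply Hy. split; [split; [exact I| congruence] | exact Hy'].
Qed.

Definition ext (f : R -> R) (t : R) := f (Rmax 0 t).

Lemma ext_eq f t : 0 <= t -> ext f t = f t.
Proof. intros; unfold ext; rewrite Rmax_right; auto. Qed.

Lemma ext_cont f : right_cont_at0 f -> (forall t, 0 < t -> continuity_pt f t) -> continuity (ext f).
Proof.
  intros H0 Hp x. apply cont_eps. intros eps Heps.
  destruct (Rlt_or_le 0 x) as [Hx|Hx].
  - destruct (eps_cont _ _ (Hp x Hx) eps Heps) as [d [Hd Hy]].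
    exists (Rmin d x). split. apply Rmin_pos; lra.
    intros y Hy'. assert (Rabs (y - x) < d) by (eapply Rlt_le_trans; [exact Hy'| apply Rmin_l]).
    assert (Rabs (y - x) < x) by (eapply Rlt_le_trans; [exact Hy'| apply Rmin_r]).
    assert (0 < y) by (apply Rabs_def2 in H1; lra).
    rewrite !ext_eq by lra. apply Hy; auto.
  - destruct (H0 eps Heps) as [d [Hd Hy]].
    exists d. split; auto. intros y Hy'. unfold ext. rewrite (Rmax_left 0 x) by lra.
    destruct (Rle_dec y 0).
    + rewrite Rmax_left by lra. unfold Rminus; rewrite Rplus_opp_r, Rabs_R0; lra.
    + rewrite Rmax_right by lra. apply Hy. split; [lra|].
      apply Rabs_def2 in Hy'. lra.
Qed.

Lemma ext_deriv f t l : 0 < t -> derivable_pt_lim f t l -> derivable_pt_lim (ext f) t l.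
Proof.
  intros Ht H eps Heps. destruct (H eps Heps) as [d Hd].
  assert (Hp : 0 < Rmin d t) by (apply Rmin_pos; [apply cond_pos| lra]).
  exists (mkposreal _ Hp). intros h Hh0 Hh. simpl in Hh.
  assert (Rabs h < d) by (eapply Rlt_le_trans; [exact Hh| apply Rmin_l]).
  assert (Rabs h < t) by (eapply Rlt_le_trans; [exact Hh| apply Rmin_r]).
  apply Rabs_def2 in H1.
  rewrite !ext_eq by lra. apply Hd; auto.
Qed.

Lemma mvt0 F d a b : a < b -> (forall c, a <= c <= b -> continuity_pt F c) ->
  (forall c, a < c < b -> derivable_pt_lim F c (d c)) ->
  exists c, a < c < b /\ F b - F a = d c * (b - a).
Proof.
  intros Hab Hc Hd.
  assert (pr1 : forall c, a < c < b -> derivable_pt F c) by (intros c Hc'; exists (d c); apply Hd; exact Hc').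
  assert (pr2 : forall c, a < c < b -> derivable_pt id c) by (intros; apply derivable_pt_id).
  assert (Hi : forall c, a <= c <= b -> continuity_pt id c) by (intros; apply derivable_continuous_pt, derivable_pt_id).
  destruct (MVT F id a b pr1 pr2 Hab Hc Hi) as [c [P HP]].
  exists c. split; auto. rewrite (derive_pt_eq_0 _ _ _ (pr1 c P) (Hd c P)) in HP.
    rewrite (derive_pt_eq_0 _ _ _ (pr2 c P) (derivable_pt_lim_id c)) in HP.
    unfold id in HP. lra.
Qed.

Lemma mono_gen F d a b : (forall c, a <= c <= b -> continuity_pt F c) ->
  (forall c, a < c < b -> derivable_pt_lim F c (d c) /\ d c <= 0) ->
  forall s t, a <= s -> s <= t -> t <= b -> F t <= F s.
Proof.
  intros Hc Hd s t H1 H2 H3. destruct (Req_dec s t) as [->|Hne]; [lra|].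
  destruct (mvt0 F d s t) as [c [Hc' E]]; try lra.
  - intros; apply Hc; lra.
  - intros; apply Hd; lra.
  - assert (d c <= 0) by (apply Hd; lra). nra.
Qed.

Lemma smono_gen F d a b : (forall c, a <= c <= b -> continuity_pt F c) ->
  (forall c, a < c < b -> derivable_pt_lim F c (d c) /\ 0 < d c) ->
  forall s t, a <= s -> s < t -> t <= b -> F s < F t.
Proof.
  intros Hc Hd s t H1 H2 H3.
  destruct (mvt0 F d s t) as [c [Hc' E]]; try lra.
  - intros; apply Hc; lra.
  - intros; apply Hd; lra.
  - assert (0 < d c) by (apply Hd; lra). nra.
Qed.

Lemma mono F d a : continuity F -> (forall c, a < c -> derivable_pt_lim F c (d c) /\ d c <= 0) ->
  forall s t, a <= s -> s <= t -> F t <= F s.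
Proof.
  intros Hc Hd s t H1 H2. apply (mono_gen F d a t); auto; try lra.
  intros; apply Hd; lra.
Qed.

Lemma smono F d a : continuity F -> (forall c, a < c -> derivable_pt_lim F c (d c) /\ 0 < d c) ->
  forall s t, a <= s -> s < t -> F s < F t.
Proof.
  intros Hc Hd s t H1 H2. apply (smono_gen F d a t); auto; try lra.
  intros; apply Hd; lra.
Qed.

Lemma const0 F : continuity F -> (forall c, 0 < c -> derivable_pt_lim F c 0) ->
  forall t, 0 <= t -> F t = F 0.
Proof.
  intros Hc Hd t Ht. apply Rle_antisym.
  - apply (mono F (fun _ => 0) 0); auto; try lra. intros; split; auto; lra.
  - assert (forall s t, 0 <= s -> s <= t -> (fun x => - F x) t <= (fun x => - F x) s).
    { apply (mono _ (fun _ => 0) 0).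
      + intro x; apply continuity_pt_opp; auto.
      + intros c Hc'; split; [|lra]. replace 0 with (- 0) by ring. apply derivable_pt_lim_opp; auto. }
    specialize (H 0 t (Rle_refl 0) Ht). simpl in H. lra.
Qed.

Lemma dcomp f g x l1 l2 : derivable_pt_lim f x l1 -> derivable_pt_lim g (f x) l2 ->
  derivable_pt_lim (fun y => g (f y)) x (l2 * l1).
Proof. intros; apply (derivable_pt_lim_comp f g); auto. Qed.

Lemma dmult f g x l1 l2 : derivable_pt_lim f x l1 -> derivable_pt_lim g x l2 ->
  derivable_pt_lim (fun y => f y * g y) x (l1 * g x + f x * l2).
Proof. intros; apply (derivable_pt_lim_mult f g); auto. Qed.
Lemma dplus f g x l1 l2 : derivable_pt_lim f x l1 -> derivable_pt_lim g x l2 ->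
  derivable_pt_lim (fun y => f y + g y) x (l1 + l2).
Proof. intros; apply (derivable_pt_lim_plus f g); auto. Qed.
Lemma dminus f g x l1 l2 : derivable_pt_lim f x l1 -> derivable_pt_lim g x l2 ->
  derivable_pt_lim (fun y => f y - g y) x (l1 - l2).
Proof. intros; apply (derivable_pt_lim_minus f g); auto. Qed.
Lemma dopp f x l1 : derivable_pt_lim f x l1 -> derivable_pt_lim (fun y => - f y) x (- l1).
Proof. intros; apply (derivable_pt_lim_opp f); auto. Qed.
Lemma dconst c x : derivable_pt_lim (fun _ => c) x 0.
Proof. apply derivable_pt_lim_const. Qed.
Lemma dscal c f x l : derivable_pt_lim f x l -> derivable_pt_lim (fun y => c * f y) x (c * l).
Proof. intros; apply (derivable_pt_lim_scal f); auto. Qed.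
Lemma dinv f x l : f x <> 0 -> derivable_pt_lim f x l -> derivable_pt_lim (fun y => / f y) x (- l / (f x)^2).
Proof.
  intros Hf Hd. 
  assert (H := derivable_pt_lim_div (fct_cte 1) f x 0 l (derivable_pt_lim_const 1 x) Hd Hf).
  intros eps Heps. destruct (H eps Heps) as [d Hd']. exists d. intros h H1 H2.
  specialize (Hd' h H1 H2). unfold div_fct, fct_cte in Hd'.
  replace (- l / f x ^ 2) with ((0 * f x - l * 1) / f x ^ 2) by (field; auto).
  replace (/ f (x + h) - / f x) with (1 / f (x + h) - 1 / f x) by (unfold Rdiv; ring).
  replace (f x ^ 2) with (f x)² by (unfold Rsqr; ring). exact Hd'.
Qed.
Lemma dpow f x l n : derivable_pt_lim f x l -> derivable_pt_lim (fun y => f y ^ n) x (INR n * f x ^ (pred n) * l).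
Proof. intros; apply (dcomp f (fun z => z ^ n)); auto. apply derivable_pt_lim_pow. Qed.

Lemma dexp f x l : derivable_pt_lim f x l -> derivable_pt_lim (fun y => exp (f y)) x (exp (f x) * l).
Proof. intros; apply (dcomp f exp); auto. apply derivable_pt_lim_exp. Qed.

Lemma cexp f x : continuity_pt f x -> continuity_pt (fun y => exp (f y)) x.
Proof. intros; apply (continuity_pt_comp f exp); auto. apply derivable_continuous_pt, derivable_pt_exp. Qed.

Lemma linear_ode F k K : continuity F -> continuity K ->
  (forall t, 0 < t -> derivable_pt_lim K t (k t)) ->
  (forall t, 0 < t -> derivable_pt_lim F t (k t * F t)) ->
  forall t, 0 <= t -> F t = F 0 * exp (K t - K 0).
Proof.
  intros HF HK HdK HdF t Ht.
  set (H := fun x => F x * exp (- K x)).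
  assert (E : H t = H 0).
  { apply const0; auto.
    - intro x. unfold H. apply continuity_pt_mult; auto.
      apply cexp. apply continuity_pt_opp; auto.
    - intros c Hc. unfold H.
      replace 0 with (k c * F c * exp (- K c) + F c * (exp (- K c) * (- k c))) by ring.
      apply (dmult F (fun y => exp (- K y))); auto.
      apply (dexp (fun y => - K y)). apply dopp; auto. }
  unfold H in E.
  replace (K t - K 0) with (K t + - K 0) by ring. rewrite exp_plus.
  assert (exp (- K t) * exp (K t) = 1) by (rewrite <- exp_plus; replace (- K t + K t) with 0 by ring; apply exp_0).
  apply (f_equal (fun z => z * exp (K t))) in E.
  rewrite Rmult_assoc, H0, Rmult_1_r in E. rewrite E.
  rewrite exp_Ropp. field. apply Rgt_not_eq, exp_pos.
Qed.

Section Lip.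
Variables m M : R.
Hypothesis Hm : 0 < m.
Definition inb x := m <= x <= M.
Definition LB (f : R -> R -> R) := exists K Mb, forall x y x' y', inb x -> inb y -> inb x' -> inb y' ->
  Rabs (f x y) <= Mb /\ Rabs (f x y - f x' y') <= K * (Rabs (x - x') + Rabs (y - y')).

Lemma LB_const c : LB (fun _ _ => c).
Proof. exists 0, (Rabs c). intros. split; [lra|]. unfold Rminus; rewrite Rplus_opp_r, Rabs_R0.
  assert (0 <= Rabs (x + - x') + Rabs (y + - y')) by (pose proof (Rabs_pos (x + - x')); pose proof (Rabs_pos (y + - y')); lra). nra. Qed.

Lemma LB_p1 : LB (fun x _ => x).
Proof. exists 1, M. intros x y x' y' Hx Hy Hx' Hy'. unfold inb in *. split.
  rewrite Rabs_right by lra; lra. pose proof (Rabs_pos (y - y')). lra. Qed.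

Lemma LB_p2 : LB (fun _ y => y).
Proof. exists 1, M. intros x y x' y' Hx Hy Hx' Hy'. unfold inb in *. split.
  rewrite Rabs_right by lra; lra. pose proof (Rabs_pos (x - x')). lra. Qed.

Lemma LB_plus f g : LB f -> LB g -> LB (fun x y => f x y + g x y).
Proof.
  intros [K1 [M1 H1]] [K2 [M2 H2]]. exists (K1 + K2), (M1 + M2). intros x y x' y' Hx Hy Hx' Hy'.
  destruct (H1 x y x' y' Hx Hy Hx' Hy') as [A1 B1]. destruct (H2 x y x' y' Hx Hy Hx' Hy') as [A2 B2].
  split.
  - eapply Rle_trans; [apply Rabs_triang|]. lra.
  - replace (f x y + g x y - (f x' y' + g x' y')) with ((f x y - f x' y') + (g x y - g x' y')) by ring.
    eapply Rle_trans; [apply Rabs_triang|]. lra.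
Qed.

Lemma LB_opp f : LB f -> LB (fun x y => - f x y).
Proof.
  intros [K1 [M1 H1]]. exists K1, M1. intros x y x' y' Hx Hy Hx' Hy'.
  destruct (H1 x y x' y' Hx Hy Hx' Hy') as [A1 B1]. split.
  - rewrite Rabs_Ropp; auto.
  - replace (- f x y - - f x' y') with (- (f x y - f x' y')) by ring. rewrite Rabs_Ropp; auto.
Qed.

Lemma LB_minus f g : LB f -> LB g -> LB (fun x y => f x y - g x y).
Proof. intros. unfold Rminus. apply LB_plus; auto. apply LB_opp; auto. Qed.

Lemma LB_mult f g : LB f -> LB g -> LB (fun x y => f x y * g x y).
Proof.
  intros [K1 [M1 H1]] [K2 [M2 H2]]. exists (Rabs M1 * K2 + Rabs M2 * K1), (M1 * M2). intros x y x' y' Hx Hy Hx' Hy'.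
  destruct (H1 x y x' y' Hx Hy Hx' Hy') as [A1 B1]. destruct (H2 x y x' y' Hx Hy Hx' Hy') as [A2 B2].
  destruct (H2 x' y' x' y' Hx' Hy' Hx' Hy') as [A2' _].
  pose proof (Rabs_pos (f x y)). pose proof (Rabs_pos (g x y)). pose proof (Rabs_pos (g x' y')).
  pose proof (Rabs_pos (x - x')). pose proof (Rabs_pos (y - y')).
  split.
  - rewrite Rabs_mult. apply Rmult_le_compat; auto.
  - replace (f x y * g x y - f x' y' * g x' y') with (f x y * (g x y - g x' y') + g x' y' * (f x y - f x' y')) by ring.
    eapply Rle_trans; [apply Rabs_triang|]. rewrite !Rabs_mult.
    set (d := Rabs (x - x') + Rabs (y - y')).
    assert (Rabs (f x y) <= Rabs M1) by (eapply Rle_trans; [exact A1| apply RRle_abs]).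
    assert (Rabs (g x' y') <= Rabs M2) by (eapply Rle_trans; [exact A2'| apply RRle_abs]).
    pose proof (Rabs_pos (g x y - g x' y')). pose proof (Rabs_pos (f x y - f x' y')).
    assert (Rabs (f x y) * Rabs (g x y - g x' y') <= Rabs M1 * (K2 * d)) by (apply Rmult_le_compat; auto).
    assert (Rabs (g x' y') * Rabs (f x y - f x' y') <= Rabs M2 * (K1 * d)) by (apply Rmult_le_compat; auto).
    lra.
Qed.

Lemma LB_pow f n : LB f -> LB (fun x y => f x y ^ n).
Proof.
  intros Hf. induction n.
  - simpl. apply LB_const.
  - simpl. apply LB_mult; auto.
Qed.

Lemma LB_invxy : LB (fun x y => / (x * y)).
Proof.
  exists (M / (m^4) * 2), (/ (m * m)). intros x y x' y' Hx Hy Hx' Hy'. unfold inb in *.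
  assert (m * m <= x * y) by nra. assert (m * m <= x' * y') by nra.
  assert (0 < m * m) by nra.
  split.
  - rewrite Rabs_right. apply Rinv_le_contravar; lra. apply Rle_ge, Rlt_le, Rinv_0_lt_compat; lra.
  - replace (/ (x * y) - / (x' * y')) with ((x' * y' - x * y) / ((x * y) * (x' * y'))) by (field; split; nra).
    unfold Rdiv. rewrite Rabs_mult. rewrite (Rabs_right (/ _)) by (apply Rle_ge, Rlt_le, Rinv_0_lt_compat; nra).
    replace (x' * y' - x * y) with (- (y * (x - x') + x' * (y - y'))) by ring. rewrite Rabs_Ropp.
    assert (Rabs (y * (x - x') + x' * (y - y')) <= M * (Rabs (x - x') + Rabs (y - y'))).
    { eapply Rle_trans; [apply Rabs_triang|]. rewrite !Rabs_mult. rewrite (Rabs_right y), (Rabs_right x') by lra.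
      pose proof (Rabs_pos (x - x')). pose proof (Rabs_pos (y - y')). nra. }
    assert (/ (x * y * (x' * y')) <= / (m^4)).
    { apply Rinv_le_contravar. nra. replace (m^4) with ((m*m)*(m*m)) by ring. apply Rmult_le_compat; lra. }
    pose proof (Rabs_pos (x - x')). pose proof (Rabs_pos (y - y')).
    pose proof (Rabs_pos (y * (x - x') + x' * (y - y'))).
    assert (0 < / (x * y * (x' * y'))) by (apply Rinv_0_lt_compat; nra).
    assert (0 < m^4) by (apply pow_lt; lra).
    apply Rle_trans with (M * (Rabs (x - x') + Rabs (y - y')) * / (m^4)).
    + apply Rmult_le_compat; auto; lra.
    + unfold Rdiv. assert (0 <= M) by lra. assert (0 < / m^4) by (apply Rinv_0_lt_compat; lra). nra.
Qed.
End Lip.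

Definition F1 (D y z : R) := - (2/3) * rr y (D / (y * z)) z * y.
Definition F2 (D y z : R) := - (2/3) * rr z (D / (y * z)) y * z.

Ltac lbt := repeat first [ apply LB_plus | apply LB_minus | apply LB_opp | apply LB_mult | apply LB_pow
   | apply LB_invxy; assumption | apply LB_const | apply LB_p1 | apply LB_p2 ].

Lemma LB_F1 m M D : 0 < m -> LB m M (F1 D).
Proof. intros Hm. unfold F1, rr, pp, qq, Rdiv. lbt; assumption. Qed.
Lemma LB_F2 m M D : 0 < m -> LB m M (F2 D).
Proof. intros Hm. unfold F2, rr, pp, qq, Rdiv. lbt; assumption. Qed.

Lemma minmax f T : 0 <= T -> continuity f -> exists lo hi, (forall c, 0 <= c <= T -> lo <= f c <= hi) /\
   (exists p, 0 <= p <= T /\ f p = lo).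
Proof.
  intros HT Hf. destruct (continuity_ab_min f 0 T HT (fun c _ => Hf c)) as [p [Hp1 Hp2]].
  destruct (continuity_ab_maj f 0 T HT (fun c _ => Hf c)) as [q [Hq1 Hq2]].
  exists (f p), (f q). split. intros c Hc. split; auto. exists p; auto.
Qed.

Lemma bound_key (k u v d1 d2 kap K : R) : Rabs k <= kap -> Rabs d1 <= K * (Rabs u + Rabs v) -> Rabs d2 <= K * (Rabs u + Rabs v) ->
  0 <= K ->
  2 * u * (k * d1) + 2 * v * (k * d2) <= 4 * kap * K * (u^2 + v^2).
Proof.
  intros Hk H1 H2 HK.
  assert (E: 2 * u * (k * d1) + 2 * v * (k * d2) = 2 * k * (u * d1 + v * d2)) by ring. rewrite E.
  apply Rle_trans with (Rabs (2 * k * (u * d1 + v * d2))); [apply RRle_abs|].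
  rewrite !Rabs_mult. rewrite (Rabs_right 2) by lra.
  assert (A: Rabs (u * d1 + v * d2) <= Rabs u * Rabs d1 + Rabs v * Rabs d2).
  { eapply Rle_trans; [apply Rabs_triang|]. rewrite !Rabs_mult. lra. }
  pose proof (Rabs_pos u). pose proof (Rabs_pos v). pose proof (Rabs_pos d1). pose proof (Rabs_pos d2).
  pose proof (Rabs_pos k). pose proof (Rabs_pos (u * d1 + v * d2)).
  assert (B: Rabs u * Rabs d1 + Rabs v * Rabs d2 <= K * (Rabs u + Rabs v)^2).
  { assert (Rabs u * Rabs d1 <= Rabs u * (K * (Rabs u + Rabs v))) by (apply Rmult_le_compat_l; auto).
    assert (Rabs v * Rabs d2 <= Rabs v * (K * (Rabs u + Rabs v))) by (apply Rmult_le_compat_l; auto).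
    nra. }
  assert (C: (Rabs u + Rabs v)^2 <= 2 * (u^2 + v^2)).
  { rewrite <- (pow2_abs u), <- (pow2_abs v). assert (0 <= (Rabs u - Rabs v)^2) by apply pow2_ge_0. nra. }
  assert (Rabs (u * d1 + v * d2) <= 2 * K * (u^2+v^2)) by nra.
  assert (0 <= kap) by lra.
  assert (Rabs k * Rabs (u * d1 + v * d2) <= kap * (2 * K * (u^2+v^2))) by (apply Rmult_le_compat; auto).
  nra.
Qed.

Lemma uniq D k y1 y2 z1 z2 :
  continuity k -> continuity y1 -> continuity y2 -> continuity z1 -> continuity z2 ->
  (forall t, 0 <= t -> 0 < y1 t /\ 0 < y2 t /\ 0 < z1 t /\ 0 < z2 t) ->
  y1 0 = z1 0 -> y2 0 = z2 0 ->
  (forall t, 0 < t -> derivable_pt_lim y1 t (k t * F1 D (y1 t) (y2 t)) /\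
                      derivable_pt_lim y2 t (k t * F2 D (y1 t) (y2 t)) /\
                      derivable_pt_lim z1 t (k t * F1 D (z1 t) (z2 t)) /\
                      derivable_pt_lim z2 t (k t * F2 D (z1 t) (z2 t))) ->
  forall t, 0 <= t -> y1 t = z1 t /\ y2 t = z2 t.
Proof.
  intros Hk Hy1 Hy2 Hz1 Hz2 Hpos H10 H20 Hd T HT.
  destruct (minmax y1 T HT Hy1) as [l1 [u1 [B1 [p1 [Hp1 E1]]]]].
  destruct (minmax y2 T HT Hy2) as [l2 [u2 [B2 [p2 [Hp2 E2]]]]].
  destruct (minmax z1 T HT Hz1) as [l3 [u3 [B3 [p3 [Hp3 E3]]]]].
  destruct (minmax z2 T HT Hz2) as [l4 [u4 [B4 [p4 [Hp4 E4]]]]].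
  assert (Hka : continuity (fun x => Rabs (k x))) by (intro x; apply (continuity_pt_comp k Rabs); [apply Hk| apply Rcontinuity_abs]).
  destruct (minmax _ T HT Hka) as [kl [kap [Bk _]]].
  assert (0 < l1) by (rewrite <- E1; apply Hpos; lra).
  assert (0 < l2) by (rewrite <- E2; apply Hpos; lra).
  assert (0 < l3) by (rewrite <- E3; apply Hpos; lra).
  assert (0 < l4) by (rewrite <- E4; apply Hpos; lra).
  set (m := Rmin (Rmin l1 l2) (Rmin l3 l4)).
  set (M := Rmax (Rmax u1 u2) (Rmax u3 u4)).
  assert (Hm : 0 < m) by (unfold m; repeat apply Rmin_pos; auto).
  assert (Hin : forall f lo hi, (forall c, 0 <= c <= T -> lo <= f c <= hi) -> m <= lo -> hi <= M ->
     forall c, 0 <= c <= T -> inb m M (f c)).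
  { intros f lo hi Hb Hlo Hhi c Hc. specialize (Hb c Hc). unfold inb. lra. }
  assert (I1 : forall c, 0 <= c <= T -> inb m M (y1 c)).
  { apply (Hin _ l1 u1 B1); unfold m, M; [repeat (apply Rmin_glb_lt || apply Rmin_l || idtac) |].
    apply Rle_trans with (Rmin l1 l2); apply Rmin_l. apply Rle_trans with (Rmax u1 u2); apply Rmax_l. }
  assert (I2 : forall c, 0 <= c <= T -> inb m M (y2 c)).
  { apply (Hin _ l2 u2 B2); unfold m, M.
    apply Rle_trans with (Rmin l1 l2); [apply Rmin_l| apply Rmin_r]. apply Rle_trans with (Rmax u1 u2); [apply Rmax_r| apply Rmax_l]. }
  assert (I3 : forall c, 0 <= c <= T -> inb m M (z1 c)).
  { apply (Hin _ l3 u3 B3); unfold m, M.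
    apply Rle_trans with (Rmin l3 l4); [apply Rmin_r| apply Rmin_l]. apply Rle_trans with (Rmax u3 u4); [apply Rmax_l| apply Rmax_r]. }
  assert (I4 : forall c, 0 <= c <= T -> inb m M (z2 c)).
  { apply (Hin _ l4 u4 B4); unfold m, M.
    apply Rle_trans with (Rmin l3 l4); [apply Rmin_r| apply Rmin_r]. apply Rle_trans with (Rmax u3 u4); [apply Rmax_r| apply Rmax_r]. }
  destruct (LB_F1 m M D Hm) as [K1 [Mb1 L1]].
  destruct (LB_F2 m M D Hm) as [K2 [Mb2 L2]].
  set (K := Rabs K1 + Rabs K2).
  assert (HK : 0 <= K) by (unfold K; pose proof (Rabs_pos K1); pose proof (Rabs_pos K2); lra).
  assert (Hkap : 0 <= kap) by (specialize (Bk 0 ltac:(lra)); pose proof (Rabs_pos (k 0)); lra).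
  set (c := 4 * kap * K).
  set (E := fun x => (y1 x - z1 x)^2 + (y2 x - z2 x)^2).
  set (Hf := fun x => E x * exp (- c * x)).
  assert (HE0 : E 0 = 0) by (unfold E; rewrite H10, H20; ring).
  assert (Hmon : Hf T <= Hf 0).
  { apply (mono_gen Hf (fun x => exp (- c * x) * ((2 * (y1 x - z1 x) * (k x * F1 D (y1 x) (y2 x) - k x * F1 D (z1 x) (z2 x))
                                                 + 2 * (y2 x - z2 x) * (k x * F2 D (y1 x) (y2 x) - k x * F2 D (z1 x) (z2 x))) - c * E x)) 0 T); try lra.
    - intros x _. unfold Hf, E. apply continuity_pt_mult.
      + apply continuity_pt_plus; apply continuity_pt_comp with (f2 := fun z => z^2);
          try (apply continuity_pt_minus; auto); apply derivable_continuous_pt, derivable_pt_pow.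
      + apply cexp. apply continuity_pt_mult. apply continuity_pt_const; intros ? ?; auto. apply derivable_continuous_pt, derivable_pt_id.
    - intros x Hx. destruct (Hd x ltac:(lra)) as [D1 [D2 [D3 D4]]]. split.
      + unfold Hf. replace (exp (- c * x) * _) with
          ((2 * (y1 x - z1 x) * (k x * F1 D (y1 x) (y2 x) - k x * F1 D (z1 x) (z2 x))
                                                 + 2 * (y2 x - z2 x) * (k x * F2 D (y1 x) (y2 x) - k x * F2 D (z1 x) (z2 x))) * exp (- c * x) + E x * (exp (- c * x) * (- c * 1))) by ring.
        apply (dmult E (fun x => exp (- c * x))).
        * unfold E. replace (2 * (y1 x - z1 x) * (k x * F1 D (y1 x) (y2 x) - k x * F1 D (z1 x) (z2 x)) +
                  2 * (y2 x - z2 x) * (k x * F2 D (y1 x) (y2 x) - k x * F2 D (z1 x) (z2 x)))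
             with (INR 2 * (y1 x - z1 x) ^ 1 * (k x * F1 D (y1 x) (y2 x) - k x * F1 D (z1 x) (z2 x)) +
                   INR 2 * (y2 x - z2 x) ^ 1 * (k x * F2 D (y1 x) (y2 x) - k x * F2 D (z1 x) (z2 x))) by (simpl; ring).
          apply (dplus (fun x => (y1 x - z1 x)^2) (fun x => (y2 x - z2 x)^2)).
          -- apply (dpow (fun x => y1 x - z1 x)). apply dminus; auto.
          -- apply (dpow (fun x => y2 x - z2 x)). apply dminus; auto.
        * apply (dexp (fun x => - c * x)). apply dscal. apply derivable_pt_lim_id.
      + assert (0 < exp (- c * x)) by apply exp_pos.
        assert (2 * (y1 x - z1 x) * (k x * F1 D (y1 x) (y2 x) - k x * F1 D (z1 x) (z2 x)) +
                2 * (y2 x - z2 x) * (k x * F2 D (y1 x) (y2 x) - k x * F2 D (z1 x) (z2 x)) <= c * E x).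
        { replace (k x * F1 D (y1 x) (y2 x) - k x * F1 D (z1 x) (z2 x)) with (k x * (F1 D (y1 x) (y2 x) - F1 D (z1 x) (z2 x))) by ring.
          replace (k x * F2 D (y1 x) (y2 x) - k x * F2 D (z1 x) (z2 x)) with (k x * (F2 D (y1 x) (y2 x) - F2 D (z1 x) (z2 x))) by ring.
          unfold c, E. apply bound_key; auto.
          - apply Bk; lra.
          - destruct (L1 (y1 x) (y2 x) (z1 x) (z2 x)) as [_ Q]; try (first [apply I1 | apply I2 | apply I3 | apply I4]; lra).
            eapply Rle_trans; [exact Q|]. apply Rmult_le_compat_r.
            pose proof (Rabs_pos (y1 x - z1 x)); pose proof (Rabs_pos (y2 x - z2 x)); lra.
            unfold K. pose proof (RRle_abs K1); pose proof (Rabs_pos K2); lra.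
          - destruct (L2 (y1 x) (y2 x) (z1 x) (z2 x)) as [_ Q]; try (first [apply I1 | apply I2 | apply I3 | apply I4]; lra).
            eapply Rle_trans; [exact Q|]. apply Rmult_le_compat_r.
            pose proof (Rabs_pos (y1 x - z1 x)); pose proof (Rabs_pos (y2 x - z2 x)); lra.
            unfold K. pose proof (RRle_abs K2); pose proof (Rabs_pos K1); lra. }
        nra. }
  unfold Hf in Hmon. rewrite HE0 in Hmon. assert (0 < exp (- c * T)) by apply exp_pos.
  assert (E T <= 0) by nra. unfold E in H4.
  assert (0 <= (y1 T - z1 T)^2) by apply pow2_ge_0. assert (0 <= (y2 T - z2 T)^2) by apply pow2_ge_0.
  assert ((y1 T - z1 T)^2 = 0) by lra. assert ((y2 T - z2 T)^2 = 0) by lra.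
  split; nra.
Qed.

Lemma dext f g x l : (forall y, f y = g y) -> derivable_pt_lim f x l -> derivable_pt_lim g x l.
Proof. intros E H eps Heps. destruct (H eps Heps) as [d Hd]. exists d. intros. rewrite <- !E. auto. Qed.

Lemma incr F d a : continuity F -> (forall c, a < c -> derivable_pt_lim F c (d c) /\ 0 <= d c) ->
  forall s t, a <= s -> s <= t -> F s <= F t.
Proof.
  intros Hc Hd s t H1 H2.
  assert (forall s t, a <= s -> s <= t -> (fun x => - F x) t <= (fun x => - F x) s).
  { apply (mono _ (fun x => - d x) a).
    + intro x; apply continuity_pt_opp; auto.
    + intros c Hc'; destruct (Hd c Hc'); split; [apply dopp; auto| lra]. }
  specialize (H s t H1 H2). simpl in H. lra.
Qed.

Definition TL f l := is_lim f p_infty (Finite l).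

Lemma TL_iff f l : tends_to_at_infty f l <-> TL f l.
Proof.
  unfold TL. rewrite <- is_lim_spec. simpl. split.
  - intros H eps. destruct (H eps (cond_pos eps)) as [T HT]. exists T. intros x Hx. apply HT; lra.
  - intros H eps Heps. destruct (H (mkposreal eps Heps)) as [T HT]. exists (T + 1). intros x Hx. apply HT; lra.
Qed.
Lemma TI_iff f : tends_to_infty f <-> is_lim f p_infty p_infty.
Proof.
  rewrite <- is_lim_spec. simpl. split.
  - intros H M. destruct (H M) as [T HT]. exists T. intros x Hx. apply HT; lra.
  - intros H M. destruct (H M) as [T HT]. exists (T + 1). intros x Hx. apply HT; lra.
Qed.

Lemma TL_plus f g a b : TL f a -> TL g b -> TL (fun x => f x + g x) (a + b).
Proof. intros; apply is_lim_plus'; auto. Qed.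
Lemma TL_minus f g a b : TL f a -> TL g b -> TL (fun x => f x - g x) (a - b).
Proof. intros; apply is_lim_minus'; auto. Qed.
Lemma TL_mult f g a b : TL f a -> TL g b -> TL (fun x => f x * g x) (a * b).
Proof. intros Hf Hg. unfold TL. apply (is_lim_mult f g p_infty a b Hf Hg). simpl; auto. Qed.
Lemma TL_opp f a : TL f a -> TL (fun x => - f x) (- a).
Proof. intros Hf. unfold TL. apply (is_lim_opp f p_infty a Hf). Qed.
Lemma TL_const a : TL (fun _ => a) a.
Proof. apply is_lim_const. Qed.
Lemma TL_pow f a n : TL f a -> TL (fun x => f x ^ n) (a ^ n).
Proof. intros Hf. induction n; simpl. apply TL_const. apply TL_mult; auto. Qed.
Lemma TL_inv f a : a <> 0 -> TL f a -> TL (fun x => / f x) (/ a).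
Proof. intros Ha Hf. unfold TL. apply (is_lim_inv f p_infty a Hf). intro E; apply Ha. injection E; auto. Qed.

Ltac tlt1 := match goal with
  | H : TL ?f ?l |- TL (fun x => ?f x) ?l => exact H
  | H : TL ?f ?l |- TL ?f ?l => exact H
  | |- TL (fun x => @?f x - @?g x) (?a - ?b) => apply (TL_minus f g a b)
  | |- TL (fun x => @?f x + @?g x) (?a + ?b) => apply (TL_plus f g a b)
  | |- TL (fun x => @?f x * @?g x) (?a * ?b) => apply (TL_mult f g a b)
  | |- TL (fun x => @?f x ^ ?n) (?a ^ ?n) => apply (TL_pow f a n)
  | |- TL (fun x => - @?f x) (- ?a) => apply (TL_opp f a)
  | |- TL (fun _ => ?a) ?a => apply (TL_const a)
  end.
Ltac tlt := repeat tlt1.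

Lemma TL_comp f sg l : TL f l -> is_lim sg p_infty p_infty -> TL (fun t => f (sg t)) l.
Proof.
  intros Hf Hs. unfold TL. apply (is_lim_comp f sg p_infty l p_infty); auto.
  exists 0. intros; discriminate.
Qed.

Lemma schur0 x y z : 0 <= z -> z <= y -> y <= x -> 0 <= pp x y z.
Proof.
  intros. assert (E: pp x y z = (x-y)*(x^2*(x-z) - y^2*(y-z))+z^2*(x-z)*(y-z)) by (unfold pp; ring).
  rewrite E. assert (x^2*(x-z) - y^2*(y-z) >= 0).
  { assert (x^2 >= y^2) by nra. nra. }
  assert (0 <= z^2*(x-z)*(y-z)). { apply Rmult_le_pos; [apply Rmult_le_pos|]; nra. }
  nra.
Qed.
Lemma schur x y z : 0 <= x -> 0 <= y -> 0 <= z -> 0 <= pp x y z.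
Proof.
  intros.
  assert (S1: forall a b c, pp a b c = pp b a c) by (intros; unfold pp; ring).
  assert (S2: forall a b c, pp a b c = pp a c b) by (intros; unfold pp; ring).
  destruct (Rle_dec x y), (Rle_dec y z), (Rle_dec x z).
  - rewrite S1, S2, S1. apply schur0; lra.
  - lra.
  - rewrite S1, S2. apply schur0; lra.
  - rewrite S1. apply schur0; lra.
  - rewrite S2, S1. apply schur0; lra.
  - rewrite S2. apply schur0; lra.
  - lra.
  - apply schur0; lra.
Qed.

Lemma TI_pos_mult f g l : TL f l -> 0 < l -> is_lim g p_infty p_infty -> is_lim (fun x => f x * g x) p_infty p_infty.
Proof.
  intros Hf Hl Hg. unfold TL in Hf. apply is_lim_spec in Hf. apply is_lim_spec in Hg. apply is_lim_spec. simpl in *.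
  intros M. destruct (Hf (mkposreal (l/2) ltac:(lra))) as [N1 HN1]. simpl in HN1.
  destruct (Hg (Rabs M * 2 / l + 1)) as [N2 HN2]. exists (Rmax N1 N2). intros x Hx.
  assert (A: Rabs (f x - l) < l / 2) by (apply HN1; pose proof (Rmax_l N1 N2); lra).
  assert (Bq: Rabs M * 2 / l + 1 < g x) by (apply HN2; pose proof (Rmax_r N1 N2); lra).
  apply Rabs_def2 in A. assert (0 <= Rabs M * 2 / l) by (apply Rle_mult_inv_pos; [pose proof (Rabs_pos M); lra | lra]).
  assert (f x * g x >= l / 2 * g x) by nra.
  assert (l / 2 * g x > l / 2 * (Rabs M * 2 / l)) by nra.
  replace (l / 2 * (Rabs M * 2 / l)) with (Rabs M) in * by (field; lra).
  pose proof (RRle_abs M). lra.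
Qed.

Lemma TI_exp f a : 0 < a -> is_lim f p_infty p_infty -> is_lim (fun x => exp (a * f x)) p_infty p_infty.
Proof.
  intros Ha Hf. apply is_lim_spec in Hf. apply is_lim_spec. simpl in *. intros M.
  destruct (Hf (M / a)) as [N HN]. exists N. intros x Hx. specialize (HN x Hx).
  pose proof (exp_ineq1_le (a * f x)).
  assert (a * (M / a) < a * f x) by (apply Rmult_lt_compat_l; auto).
  replace (a * (M / a)) with M in * by (field; lra). lra.
Qed.

Lemma TL_exp_minf f a : 0 < a -> is_lim f p_infty p_infty -> TL (fun x => exp (- a * f x)) 0.
Proof.
  intros Ha Hf. apply is_lim_spec in Hf. unfold TL. apply is_lim_spec. simpl in *. intros eps.
  destruct (Hf (- ln eps / a)) as [N HN]. exists N. intros x Hx. specialize (HN x Hx).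
  rewrite Rminus_0_r, Rabs_right by (apply Rle_ge, Rlt_le, exp_pos).
  assert (a * (- ln eps / a) < a * f x) by (apply Rmult_lt_compat_l; auto).
  replace (a * (- ln eps / a)) with (- ln eps) in * by (field; lra).
  rewrite <- (exp_ln eps) by apply cond_pos. apply exp_increasing. lra.
Qed.

Lemma TL_ext f g l : (forall t, 0 <= t -> f t = g t) -> TL f l -> TL g l.
Proof. intros E H. apply (is_lim_ext_loc f g). exists 0. intros; apply E; lra. exact H. Qed.
Lemma TI_ext f g : (forall t, 0 <= t -> f t = g t) -> is_lim f p_infty p_infty -> is_lim g p_infty p_infty.
Proof. intros E H. apply (is_lim_ext_loc f g). exists 0. intros; apply E; lra. exact H. Qed.

Lemma TI_comp f sg : is_lim f p_infty p_infty -> is_lim sg p_infty p_infty -> is_lim (fun t => f (sg t)) p_infty p_infty.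
Proof. intros Hf Hs. apply (is_lim_comp f sg p_infty p_infty p_infty); auto. exists 0. intros; discriminate. Qed.

Lemma alg_Y1 beta w G0 G1 G2 G3 D : 0 < w -> 0 < G2 -> 0 < G3 -> G0 = w ^ 3 -> D = G0 * G1 * G2 * G3 ->
  (- (1/3) * (beta * pp G1 G2 G3 * G0 ^ 2) * w) * G2 + w * (- beta * qq G2 G3 G1 * G0 ^ 2 * G2)
  = beta * w ^ 2 * F1 D (w * G2) (w * G3).
Proof.
  intros Hw H2 H3 E0 ED. unfold F1.
  replace (D / (w * G2 * (w * G3))) with (w * G1) by (subst; field; lra).
  subst. unfold rr, pp, qq. field.
Qed.
Lemma alg_Y2 beta w G0 G1 G2 G3 D : 0 < w -> 0 < G2 -> 0 < G3 -> G0 = w ^ 3 -> D = G0 * G1 * G2 * G3 ->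
  (- (1/3) * (beta * pp G1 G2 G3 * G0 ^ 2) * w) * G3 + w * (- beta * qq G3 G1 G2 * G0 ^ 2 * G3)
  = beta * w ^ 2 * F2 D (w * G2) (w * G3).
Proof.
  intros Hw H2 H3 E0 ED. unfold F2.
  replace (D / (w * G2 * (w * G3))) with (w * G1) by (subst; field; lra).
  subst. unfold rr, pp, qq. field.
Qed.
Lemma alg_prod beta a b c d : 
  (- beta * pp b c d * a ^ 3) * b * c * d + a * (- beta * qq b c d * a ^ 2 * b) * c * d
  + a * b * (- beta * qq c d b * a ^ 2 * c) * d + a * b * c * (- beta * qq d b c * a ^ 2 * d) = 0.
Proof. unfold pp, qq. ring. Qed.

Lemma alg_g0 beta w A B C : 0 < w ->
  INR 3 * w ^ 2 * (- (1/3) * pp A B C * (beta * w ^ 2) * w) = - beta * pp (A / w) (B / w) (C / w) * (w ^ 3) ^ 3.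
Proof. intros Hw. simpl INR. unfold pp. field. lra. Qed.
Lemma alg_g2 beta w A B C : 0 < w -> 0 < B -> 0 < C ->
  F1 (A * B * C) B C * (beta * w ^ 2) * / w + B * (- (- (1/3) * pp A B C * (beta * w ^ 2) * w) / w ^ 2)
  = - beta * qq (B / w) (C / w) (A / w) * (w ^ 3) ^ 2 * (B / w).
Proof.
  intros Hw HB HC. unfold F1. replace (A * B * C / (B * C)) with A by (field; lra).
  unfold rr, pp, qq. field. lra.
Qed.
Lemma alg_g3 beta w A B C : 0 < w -> 0 < B -> 0 < C ->
  F2 (A * B * C) B C * (beta * w ^ 2) * / w + C * (- (- (1/3) * pp A B C * (beta * w ^ 2) * w) / w ^ 2)
  = - beta * qq (C / w) (A / w) (B / w) * (w ^ 3) ^ 2 * (C / w).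
Proof.
  intros Hw HB HC. unfold F2. replace (A * B * C / (B * C)) with A by (field; lra).
  unfold rr, pp, qq. field. lra.
Qed.
Lemma alg_g1 beta w A B C : 0 < w -> 0 < B -> 0 < C ->
  A * B * C * (- (F1 (A * B * C) B C * (beta * w ^ 2) * C + B * (F2 (A * B * C) B C * (beta * w ^ 2))) / (B * C) ^ 2) * / w
  + A * B * C * / (B * C) * (- (- (1/3) * pp A B C * (beta * w ^ 2) * w) / w ^ 2)
  = - beta * qq (A / w) (B / w) (C / w) * (w ^ 3) ^ 2 * (A / w).
Proof.
  intros Hw HB HC. unfold F1, F2. replace (A * B * C / (B * C)) with A by (field; lra).
  unfold rr, pp, qq. field. lra.
Qed.

Definition primf (k : R -> R) (t : R) := RInt k 0 t.
Lemma primf_0 k : primf k 0 = 0.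
Proof. unfold primf. rewrite RInt_point; reflexivity. Qed.
Lemma primf_d k : continuity k -> forall t, derivable_pt_lim (primf k) t (k t).
Proof.
  intros Hk t. apply is_derive_Reals. apply (is_derive_RInt k (primf k) 0).
  + exists (mkposreal 1 Rlt_0_1). intros y _. refine (RInt_correct (V:=R_CompleteNormedModule) k 0 y _).
    apply ex_RInt_continuous. intros z _. apply continuity_pt_filterlim. apply Hk.
  + apply continuity_pt_filterlim. apply Hk.
Qed.
Lemma primf_c k : continuity k -> continuity (primf k).
Proof. intros Hk t. apply derivable_continuous_pt. exists (k t). apply primf_d; auto. Qed.

Lemma cpow f n : continuity f -> continuity (fun x => f x ^ n).
Proof. intros Hf x. apply (continuity_pt_comp f (fun z => z ^ n)); auto. apply derivable_continuous_pt, derivable_pt_pow. Qed.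

Lemma cplus f g : continuity f -> continuity g -> continuity (fun x => f x + g x).
Proof. intros; apply (continuity_plus f g); auto. Qed.
Lemma cminus f g : continuity f -> continuity g -> continuity (fun x => f x - g x).
Proof. intros; apply (continuity_minus f g); auto. Qed.
Lemma cmult f g : continuity f -> continuity g -> continuity (fun x => f x * g x).
Proof. intros; apply (continuity_mult f g); auto. Qed.
Lemma copp f : continuity f -> continuity (fun x => - f x).
Proof. intros; apply (continuity_opp f); auto. Qed.
Lemma cconst a : continuity (fun _ => a).
Proof. apply continuity_const. intros ? ?; auto. Qed.
Ltac ctac := repeat first [ assumption | apply cplus | apply cminus | apply cmult
  | apply copp | apply cpow | apply cconst | assumption ].

Section Main.
Variables h0 h1 h2 h3 : R.
Variables b c : R -> R.
Hypothesis H0 : 0 < h0.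
Hypothesis H1 : 0 < h1.
Hypothesis H2 : 0 < h2.
Hypothesis H3 : 0 < h3.
Definition Dd := h0 * h1 * h2 * h3.
Definition beta := 1 / (6 * Dd ^ 2).
Definition W0 := Rpower h0 (1/3).
Definition LL := Rpower (4 * Dd) (1/3).
Hypothesis HP : P_global_solution Dd (W0 * h2) (W0 * h3) b c.
Hypothesis Hbl : tends_to_at_infty b LL.
Hypothesis Hcl : tends_to_at_infty c LL.

Definition B := ext b.
Definition C := ext c.
Definition Ab s := Dd / (B s * C s).
Definition Pi s := pp (Ab s) (B s) (C s).
Definition Phi := primf Pi.
Definition Td s := exp (2/3 * Phi s) / (beta * W0 ^ 2).
Definition T := primf Td.

Lemma Dd_pos : 0 < Dd.
Proof. unfold Dd. repeat apply Rmult_lt_0_compat; auto. Qed.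
Lemma beta_pos : 0 < beta.
Proof. unfold beta. pose proof Dd_pos. apply Rdiv_lt_0_compat; [lra|]. apply Rmult_lt_0_compat; [lra|]. apply pow_lt; auto. Qed.
Lemma W0_pos : 0 < W0.
Proof. unfold W0, Rpower. apply exp_pos. Qed.
Lemma W0_cube : W0 ^ 3 = h0.
Proof.
  unfold W0. rewrite <- Rpower_pow by (unfold Rpower; apply exp_pos).
  rewrite Rpower_mult. simpl INR. replace (1/3 * (1 + 1 + 1)) with 1 by field. apply Rpower_1; auto.
Qed.
Lemma LL_pos : 0 < LL.
Proof. unfold LL, Rpower. apply exp_pos. Qed.
Lemma LL_cube : LL ^ 3 = 4 * Dd.
Proof.
  pose proof Dd_pos.
  unfold LL. rewrite <- Rpower_pow by (unfold Rpower; apply exp_pos).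
  rewrite Rpower_mult. simpl INR. replace (1/3 * (1 + 1 + 1)) with 1 by field. apply Rpower_1; lra.
Qed.

Lemma b_facts : b 0 = W0 * h2 /\ c 0 = W0 * h3 /\ right_cont_at0 b /\ right_cont_at0 c /\
  (forall t, 0 <= t -> 0 < b t /\ 0 < c t) /\
  (forall t, 0 < t -> derivable_pt_lim b t (- (2/3) * rr (b t) (Dd / (b t * c t)) (c t) * b t) /\
    derivable_pt_lim c t (- (2/3) * rr (c t) (Dd / (b t * c t)) (b t) * c t)).
Proof. exact HP. Qed.

Lemma B_cont : continuity B.
Proof.
  destruct b_facts as [_ [_ [Hr [_ [_ Hd]]]]]. apply ext_cont; auto.
  intros t Ht. apply derivable_continuous_pt. eexists. apply (proj1 (Hd t Ht)).
Qed.
Lemma C_cont : continuity C.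
Proof.
  destruct b_facts as [_ [_ [_ [Hr [_ Hd]]]]]. apply ext_cont; auto.
  intros t Ht. apply derivable_continuous_pt. eexists. apply (proj2 (Hd t Ht)).
Qed.
Lemma BC_pos s : 0 < B s /\ 0 < C s.
Proof.
  destruct b_facts as [_ [_ [_ [_ [Hp _]]]]]. unfold B, C, ext. apply Hp. apply Rmax_l.
Qed.
Lemma B0 : B 0 = W0 * h2.
Proof. unfold B. rewrite ext_eq by lra. apply b_facts. Qed.
Lemma C0 : C 0 = W0 * h3.
Proof. unfold C. rewrite ext_eq by lra. apply b_facts. Qed.
Lemma BC_der s : 0 < s -> derivable_pt_lim B s (F1 Dd (B s) (C s)) /\ derivable_pt_lim C s (F2 Dd (B s) (C s)).
Proof.
  intros Hs. destruct b_facts as [_ [_ [_ [_ [_ Hd]]]]]. destruct (Hd s Hs) as [Db Dc].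
  unfold B, C, F1, F2. rewrite !ext_eq by lra. split; apply ext_deriv; auto.
Qed.

Lemma Ab_cont : continuity Ab.
Proof.
  unfold Ab. intro x. apply continuity_pt_div. apply continuity_pt_const; intros ? ?; auto.
  apply continuity_pt_mult; [apply B_cont | apply C_cont].
  destruct (BC_pos x). apply Rgt_not_eq. apply Rmult_lt_0_compat; auto.
Qed.
Lemma Ab_pos s : 0 < Ab s.
Proof. unfold Ab. destruct (BC_pos s). pose proof Dd_pos. apply Rdiv_lt_0_compat; auto. apply Rmult_lt_0_compat; auto. Qed.

Lemma Pi_cont : continuity Pi.
Proof. pose proof Ab_cont. pose proof B_cont. pose proof C_cont. unfold Pi, pp. ctac. Qed.

Lemma Pi_nonneg s : 0 <= Pi s.
Proof. unfold Pi. destruct (BC_pos s). pose proof (Ab_pos s). apply schur; lra. Qed.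
Lemma Phi_d s : derivable_pt_lim Phi s (Pi s).
Proof. apply primf_d, Pi_cont. Qed.
Lemma Phi_cont : continuity Phi.
Proof. apply primf_c, Pi_cont. Qed.
Lemma Phi_0 : Phi 0 = 0.
Proof. apply primf_0. Qed.
Lemma Phi_incr s t : 0 <= s -> s <= t -> Phi s <= Phi t.
Proof. intros. apply (incr Phi Pi 0); auto. apply Phi_cont. intros; split; [apply Phi_d| apply Pi_nonneg]. Qed.
Lemma Phi_nonneg s : 0 <= s -> 0 <= Phi s.
Proof. intros. rewrite <- Phi_0. apply Phi_incr; lra. Qed.

Lemma Td_cont : continuity Td.
Proof.
  unfold Td. intro x. apply continuity_pt_div. apply cexp. apply continuity_pt_mult.
  apply continuity_pt_const; intros ? ?; auto. apply Phi_cont. apply continuity_pt_const; intros ? ?; auto.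
  pose proof beta_pos; pose proof W0_pos. apply Rgt_not_eq. apply Rmult_lt_0_compat; auto. apply pow_lt; auto.
Qed.
Lemma Td_pos s : 0 < Td s.
Proof. unfold Td. pose proof beta_pos; pose proof W0_pos. apply Rdiv_lt_0_compat. apply exp_pos.
  apply Rmult_lt_0_compat; auto. apply pow_lt; auto. Qed.
Lemma T_d s : derivable_pt_lim T s (Td s).
Proof. apply primf_d, Td_cont. Qed.
Lemma T_cont : continuity T.
Proof. apply primf_c, Td_cont. Qed.
Lemma T_0 : T 0 = 0.
Proof. apply primf_0. Qed.
Lemma T_smono s t : s < t -> T s < T t.
Proof. intros. apply (smono T Td s); auto; try lra. apply T_cont. intros; split; [apply T_d | apply Td_pos]. Qed.
Lemma T_mono s t : s <= t -> T s <= T t.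
Proof. intros. destruct (Req_dec s t). subst; lra. apply Rlt_le, T_smono; lra. Qed.
Lemma T_lower s : 0 <= s -> s / (beta * W0 ^ 2) <= T s.
Proof.
  intros Hs. pose proof beta_pos; pose proof W0_pos.
  assert (0 < beta * W0 ^ 2) by (apply Rmult_lt_0_compat; auto; apply pow_lt; auto).
 set (G0 := fun x => T x - x / (beta * W0 ^ 2)).
  assert (G: G0 0 <= G0 s).
  { apply (incr G0 (fun x => Td x - 1 / (beta * W0 ^ 2)) 0); auto; try lra.
    - intro x. apply continuity_pt_minus. apply T_cont. apply continuity_pt_div.
      apply derivable_continuous_pt, derivable_pt_id. apply continuity_pt_const; intros ? ?; auto. lra.
    - intros x Hx. split.
      + apply dminus. apply T_d. replace (1 / (beta * W0 ^ 2)) with (/ (beta * W0 ^ 2) * 1) by (field; lra).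
        apply (dext (fun y => / (beta * W0 ^ 2) * y)). intros; unfold Rdiv; ring.
        apply dscal. apply derivable_pt_lim_id.
      + unfold Td. assert (1 <= exp (2/3 * Phi x)).
        { rewrite <- exp_0. destruct (Req_dec (2/3 * Phi x) 0) as [E|E]. rewrite E; lra.
          apply Rlt_le, exp_increasing. pose proof (Phi_nonneg x). lra. }
        unfold Rdiv. assert (0 < / (beta * W0 ^ 2)) by (apply Rinv_0_lt_compat; auto). nra. }
  unfold G0 in G. rewrite T_0 in G. unfold Rdiv in *. lra.
Qed.

Lemma TL_B : TL B LL.
Proof.
  apply TL_iff. intros eps Heps. destruct (Hbl eps Heps) as [T0 HT]. exists (Rmax T0 0). intros t Ht.
  unfold B. rewrite ext_eq. apply HT. eapply Rle_trans; [apply Rmax_l| exact Ht].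
  eapply Rle_trans; [apply Rmax_r| exact Ht].
Qed.
Lemma TL_C : TL C LL.
Proof.
  apply TL_iff. intros eps Heps. destruct (Hcl eps Heps) as [T0 HT]. exists (Rmax T0 0). intros t Ht.
  unfold C. rewrite ext_eq. apply HT. eapply Rle_trans; [apply Rmax_l| exact Ht].
  eapply Rle_trans; [apply Rmax_r| exact Ht].
Qed.
Lemma TL_Ab : TL Ab (Dd / (LL * LL)).
Proof.
  pose proof TL_B. pose proof TL_C. pose proof LL_pos.
  unfold Ab, Rdiv. apply TL_mult. apply TL_const. apply TL_inv. apply Rgt_not_eq; nra. apply TL_mult; auto.
Qed.
Definition pstar := pp (Dd / (LL * LL)) LL LL.
Lemma TL_Pi : TL Pi pstar.
Proof. pose proof TL_B. pose proof TL_C. pose proof TL_Ab. unfold Pi, pstar, pp. Timeout 30 tlt. Qed.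
Lemma pstar_pos : 0 < pstar.
Proof.
  pose proof LL_pos. pose proof LL_cube. unfold pstar.
  replace (Dd / (LL * LL)) with (LL / 4). unfold pp. replace (LL/4) with (LL * /4) by (unfold Rdiv; ring).
  assert (0 < LL^4) by (apply pow_lt; auto).
  replace ((LL * / 4) ^ 4 - (LL * / 4) ^ 3 * (LL + LL) + (LL * / 4) ^ 2 * LL * LL +
    LL * / 4 * (- LL ^ 3 + LL ^ 2 * LL + LL * LL ^ 2 - LL ^ 3) + LL ^ 4 - LL ^ 3 * LL - LL * LL ^ 3 + LL ^ 4)
    with (LL^4 * (9/256)) by field. lra.
  replace Dd with (LL^3/4) by lra. field. lra.
Qed.

Lemma Phi_inf : is_lim Phi p_infty p_infty.
Proof.
  pose proof TL_Pi as HL. unfold TL in HL. apply is_lim_spec in HL. simpl in HL.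
  pose proof pstar_pos.
  destruct (HL (mkposreal (pstar/2) ltac:(lra))) as [S0 HS]. simpl in HS.
  set (S1 := Rmax S0 0 + 1).
  assert (HS1 : 0 < S1) by (unfold S1; pose proof (Rmax_r S0 0); lra).
  assert (Hlow : forall t, S1 <= t -> Phi S1 + pstar/2 * (t - S1) <= Phi t).
  { intros t Ht.
    set (G0 := fun x => Phi x - pstar/2 * x).
    assert (G: G0 S1 <= G0 t).
    { apply (incr G0 (fun x => Pi x - pstar/2 * 1) S1); auto; try lra.
      - intro x. apply continuity_pt_minus. apply Phi_cont. apply continuity_pt_mult.
        apply continuity_pt_const; intros ? ?; auto. apply derivable_continuous_pt, derivable_pt_id.
      - intros x Hx. split. apply dminus. apply Phi_d. apply dscal. apply derivable_pt_lim_id.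
        assert (S0 < x) by (unfold S1 in Hx; pose proof (Rmax_l S0 0); lra).
        specialize (HS x ltac:(assumption)). apply Rabs_def2 in HS. lra. }
    unfold G0 in G. lra. }
  apply is_lim_spec. simpl. intros M. pose proof (Phi_nonneg S1 ltac:(lra)).
  exists (S1 + Rabs M * 2 / pstar + 1). intros x Hx.
  assert (HxS : S1 <= x). { assert (0 <= Rabs M * 2 / pstar). apply Rle_mult_inv_pos. pose proof (Rabs_pos M); lra. lra. lra. }
  specialize (Hlow x HxS).
  assert (pstar / 2 * (x - S1) > Rabs M).
  { assert (HH : x - S1 > Rabs M * 2 / pstar) by lra.
    assert (pstar / 2 * (x - S1) > pstar / 2 * (Rabs M * 2 / pstar)) by (apply Rmult_gt_compat_l; lra).
    replace (pstar / 2 * (Rabs M * 2 / pstar)) with (Rabs M) in * by (field; lra). lra. }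
  pose proof (RRle_abs M). lra.
Qed.

Lemma sig_inf sg : (forall t, 0 <= t -> T (sg t) = t) -> is_lim sg p_infty p_infty.
Proof.
  intros HT. apply is_lim_spec. simpl. intros M. exists (Rmax 0 (T M)). intros x Hx.
  pose proof (Rmax_l 0 (T M)). pose proof (Rmax_r 0 (T M)).
  destruct (Rlt_or_le M (sg x)) as [|Hle]; auto.
  pose proof (T_mono _ _ Hle) as Hm. rewrite HT in Hm by lra. lra.
Qed.

Lemma asymp (sg w g0 g1 g2 g3 : R -> R) :
  (forall t, 0 <= t -> T (sg t) = t) ->
  (forall t, 0 <= t -> w t = W0 * exp (- (1/3) * Phi (sg t)) /\ g0 t = w t ^ 3 /\
     g1 t = Ab (sg t) / w t /\ g2 t = B (sg t) / w t /\ g3 t = C (sg t) / w t) ->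
  tends_to_at_infty g0 0 /\
  tends_to_infty g1 /\ tends_to_infty g2 /\ tends_to_infty g3 /\
  tends_to_at_infty (fun t => g2 t / g1 t) 4 /\
  tends_to_at_infty (fun t => g2 t / g3 t) 1.
Proof.
  intros HT Hw. pose proof (sig_inf sg HT) as Hs.
  pose proof (TI_comp Phi sg Phi_inf Hs) as HPs.
  pose proof W0_pos. pose proof LL_pos. pose proof Dd_pos.
  assert (Hwe : forall t, 0 <= t -> / w t = exp (1/3 * Phi (sg t)) * / W0).
  { intros t Ht. destruct (Hw t Ht) as [E _]. rewrite E. rewrite Rinv_mult.
    rewrite Rmult_comm, <- exp_Ropp. f_equal. f_equal. ring. }
  assert (Hexp : is_lim (fun t => exp (1/3 * Phi (sg t)) * / W0) p_infty p_infty).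
  { apply (is_lim_ext_loc (fun t => / W0 * exp (1/3 * Phi (sg t)))). exists 0; intros; cbv beta; ring.
    apply (TI_pos_mult (fun _ => / W0) _ (/ W0)). apply TL_const. apply Rinv_0_lt_compat; auto.
    apply (TI_exp (fun t => Phi (sg t))); auto; lra. }
  assert (TB : TL (fun t => B (sg t)) LL) by (apply TL_comp; auto; apply TL_B).
  assert (TC : TL (fun t => C (sg t)) LL) by (apply TL_comp; auto; apply TL_C).
  assert (TA : TL (fun t => Ab (sg t)) (Dd / (LL * LL))) by (apply TL_comp; auto; apply TL_Ab).
  assert (HApos : 0 < Dd / (LL * LL)) by (apply Rdiv_lt_0_compat; nra).
  split; [|split; [|split; [|split; [|split]]]].
  - apply TL_iff. apply (TL_ext (fun t => W0 ^ 3 * exp (- (1) * Phi (sg t)))).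
    + intros t Ht. destruct (Hw t Ht) as [E1 [E2 _]]. rewrite E2, E1. rewrite Rpow_mult_distr. f_equal.
      simpl. rewrite Rmult_1_r, <- !exp_plus. f_equal. lra.
    + replace 0 with (W0 ^ 3 * 0) by ring. apply TL_mult. apply TL_const.
      apply (TL_exp_minf (fun t => Phi (sg t))); auto; lra.
  - apply TI_iff. apply (TI_ext (fun t => Ab (sg t) * (exp (1/3 * Phi (sg t)) * / W0))).
    + intros t Ht. destruct (Hw t Ht) as [_ [_ [E _]]]. rewrite E. unfold Rdiv. rewrite Hwe; auto.
    + apply (TI_pos_mult _ _ (Dd / (LL * LL))); auto.
  - apply TI_iff. apply (TI_ext (fun t => B (sg t) * (exp (1/3 * Phi (sg t)) * / W0))).
    + intros t Ht. destruct (Hw t Ht) as [_ [_ [_ [E _]]]]. rewrite E. unfold Rdiv. rewrite Hwe; auto.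
    + apply (TI_pos_mult _ _ LL); auto.
  - apply TI_iff. apply (TI_ext (fun t => C (sg t) * (exp (1/3 * Phi (sg t)) * / W0))).
    + intros t Ht. destruct (Hw t Ht) as [_ [_ [_ [_ E]]]]. rewrite E. unfold Rdiv. rewrite Hwe; auto.
    + apply (TI_pos_mult _ _ LL); auto.
  - apply TL_iff. apply (TL_ext (fun t => B (sg t) * / Ab (sg t))).
    + intros t Ht. destruct (Hw t Ht) as [E0 [_ [E1 [E2 _]]]]. rewrite E1, E2.
      assert (0 < w t) by (rewrite E0; apply Rmult_lt_0_compat; auto; apply exp_pos).
      pose proof (Ab_pos (sg t)). field. split; lra.
    + replace 4 with (LL * / (Dd / (LL * LL))). apply TL_mult; auto. apply TL_inv; auto; lra.
      pose proof LL_cube. field_simplify; try lra. replace (LL^3) with (4 * Dd) by lra. field. lra.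
  - apply TL_iff. apply (TL_ext (fun t => B (sg t) * / C (sg t))).
    + intros t Ht. destruct (Hw t Ht) as [E0 [_ [_ [E2 E3]]]]. rewrite E2, E3.
      assert (0 < w t) by (rewrite E0; apply Rmult_lt_0_compat; auto; apply exp_pos).
      destruct (BC_pos (sg t)). field. split; lra.
    + replace 1 with (LL * / LL) by (field; lra). apply TL_mult; auto. apply TL_inv; auto; lra.
Qed.

Lemma S3_facts g0 g1 g2 g3 : S3_global_solution h0 h1 h2 h3 g0 g1 g2 g3 ->
  g0 0 = h0 /\ g1 0 = h1 /\ g2 0 = h2 /\ g3 0 = h3 /\
  right_cont_at0 g0 /\ right_cont_at0 g1 /\ right_cont_at0 g2 /\ right_cont_at0 g3 /\
  forall t, 0 < t ->
    derivable_pt_lim g0 t (- beta * pp (g1 t) (g2 t) (g3 t) * (g0 t)^3) /\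
    derivable_pt_lim g1 t (- beta * qq (g1 t) (g2 t) (g3 t) * (g0 t)^2 * g1 t) /\
    derivable_pt_lim g2 t (- beta * qq (g2 t) (g3 t) (g1 t) * (g0 t)^2 * g2 t) /\
    derivable_pt_lim g3 t (- beta * qq (g3 t) (g1 t) (g2 t) * (g0 t)^2 * g3 t).
Proof. intros H; exact H. Qed.

Lemma part2 g0 g1 g2 g3 : S3_global_solution h0 h1 h2 h3 g0 g1 g2 g3 ->
  exists sg w : R -> R, (forall t, 0 <= t -> T (sg t) = t) /\
  (forall t, 0 <= t -> w t = W0 * exp (- (1/3) * Phi (sg t)) /\ g0 t = w t ^ 3 /\
     g1 t = Ab (sg t) / w t /\ g2 t = B (sg t) / w t /\ g3 t = C (sg t) / w t).
Proof.
  intros HS. destruct (S3_facts _ _ _ _ HS) as [I0 [I1 [I2 [I3 [R0 [R1 [R2 [R3 Hd]]]]]]]].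
  set (G0 := ext g0). set (G1 := ext g1). set (G2 := ext g2). set (G3 := ext g3).
  assert (CG0 : continuity G0) by (apply ext_cont; auto; intros t Ht; apply derivable_continuous_pt; eexists; apply (Hd t Ht)).
  assert (CG1 : continuity G1) by (apply ext_cont; auto; intros t Ht; apply derivable_continuous_pt; eexists; apply (Hd t Ht)).
  assert (CG2 : continuity G2) by (apply ext_cont; auto; intros t Ht; apply derivable_continuous_pt; eexists; apply (Hd t Ht)).
  assert (CG3 : continuity G3) by (apply ext_cont; auto; intros t Ht; apply derivable_continuous_pt; eexists; apply (Hd t Ht)).
  assert (EG : forall t, 0 <= t -> G0 t = g0 t /\ G1 t = g1 t /\ G2 t = g2 t /\ G3 t = g3 t).
  { intros t Ht. unfold G0, G1, G2, G3. rewrite !ext_eq; auto. }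
  assert (DG : forall t, 0 < t ->
    derivable_pt_lim G0 t (- beta * pp (G1 t) (G2 t) (G3 t) * (G0 t)^3) /\
    derivable_pt_lim G1 t (- beta * qq (G1 t) (G2 t) (G3 t) * (G0 t)^2 * G1 t) /\
    derivable_pt_lim G2 t (- beta * qq (G2 t) (G3 t) (G1 t) * (G0 t)^2 * G2 t) /\
    derivable_pt_lim G3 t (- beta * qq (G3 t) (G1 t) (G2 t) * (G0 t)^2 * G3 t)).
  { intros t Ht. destruct (EG t ltac:(lra)) as [e0 [e1 [e2 e3]]]. rewrite e0, e1, e2, e3.
    destruct (Hd t Ht) as [d0 [d1 [d2 d3]]]. repeat split; apply ext_deriv; auto. }
  assert (HG0 : G0 0 = h0) by (rewrite (proj1 (EG 0 ltac:(lra))); auto).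
  assert (HG1 : G1 0 = h1) by (rewrite (proj1 (proj2 (EG 0 ltac:(lra)))); auto).
  assert (HG2 : G2 0 = h2) by (rewrite (proj1 (proj2 (proj2 (EG 0 ltac:(lra))))); auto).
  assert (HG3 : G3 0 = h3) by (rewrite (proj2 (proj2 (proj2 (EG 0 ltac:(lra))))); auto).
  assert (Hpos1 : forall (F k : R -> R) hh, continuity F -> continuity k -> F 0 = hh -> 0 < hh ->
     (forall t, 0 < t -> derivable_pt_lim F t (k t * F t)) -> forall t, 0 <= t -> 0 < F t).
  { intros F k hh HF Hk HF0 Hh HdF t Ht.
    rewrite (linear_ode F k (primf k) HF (primf_c k Hk) (fun t _ => primf_d k Hk t) HdF t Ht).
    rewrite HF0. apply Rmult_lt_0_compat; auto. apply exp_pos. }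
  assert (P0 : forall t, 0 <= t -> 0 < G0 t).
  { apply (Hpos1 G0 (fun t => - beta * pp (G1 t) (G2 t) (G3 t) * G0 t ^ 2) h0); auto.
    unfold pp; ctac. intros t Ht. replace (- beta * pp (G1 t) (G2 t) (G3 t) * G0 t ^ 2 * G0 t) with
      (- beta * pp (G1 t) (G2 t) (G3 t) * G0 t ^ 3) by ring. apply DG; auto. }
  assert (P1 : forall t, 0 <= t -> 0 < G1 t).
  { apply (Hpos1 G1 (fun t => - beta * qq (G1 t) (G2 t) (G3 t) * G0 t ^ 2) h1); auto.
    unfold qq; ctac. intros t Ht. apply DG; auto. }
  assert (P2 : forall t, 0 <= t -> 0 < G2 t).
  { apply (Hpos1 G2 (fun t => - beta * qq (G2 t) (G3 t) (G1 t) * G0 t ^ 2) h2); auto.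
    unfold qq; ctac. intros t Ht. apply DG; auto. }
  assert (P3 : forall t, 0 <= t -> 0 < G3 t).
  { apply (Hpos1 G3 (fun t => - beta * qq (G3 t) (G1 t) (G2 t) * G0 t ^ 2) h3); auto.
    unfold qq; ctac. intros t Ht. apply DG; auto. }
  assert (Prod : forall t, 0 <= t -> G0 t * G1 t * G2 t * G3 t = Dd).
  { intros t Ht. set (Pr := fun t => G0 t * G1 t * G2 t * G3 t).
    change (Pr t = Dd). replace Dd with (Pr 0) by (unfold Pr, Dd; rewrite HG0, HG1, HG2, HG3; auto).
    apply const0; auto. unfold Pr; ctac.
    intros x Hx. destruct (DG x Hx) as [d0 [d1 [d2 d3]]]. unfold Pr.
    replace 0 with ((((- beta * pp (G1 x) (G2 x) (G3 x) * (G0 x)^3) * G1 x + G0 x * (- beta * qq (G1 x) (G2 x) (G3 x) * (G0 x)^2 * G1 x)) * G2 x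
       + (G0 x * G1 x) * (- beta * qq (G2 x) (G3 x) (G1 x) * (G0 x)^2 * G2 x)) * G3 x
       + (G0 x * G1 x * G2 x) * (- beta * qq (G3 x) (G1 x) (G2 x) * (G0 x)^2 * G3 x))
      by (rewrite <- (alg_prod beta (G0 x) (G1 x) (G2 x) (G3 x)); ring).
    apply (dmult (fun t => G0 t * G1 t * G2 t)); auto.
    apply (dmult (fun t => G0 t * G1 t)); auto.
    apply (dmult G0 G1); auto. }
  set (psi := fun t => beta * pp (G1 t) (G2 t) (G3 t) * G0 t ^ 2).
  assert (Cpsi : continuity psi) by (unfold psi, pp; ctac).
  set (Psi := primf psi).
  set (w := fun t => W0 * exp (- (1/3) * Psi t)).
  assert (Cw : continuity w).
  { unfold w. apply cmult. apply cconst. intro x. apply cexp. apply continuity_pt_mult.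
    apply continuity_pt_const; intros ? ?; auto. apply primf_c; auto. }
  assert (Pw : forall t, 0 < w t) by (intro t; unfold w; apply Rmult_lt_0_compat; [apply W0_pos| apply exp_pos]).
  assert (Dw : forall t, derivable_pt_lim w t (- (1/3) * psi t * w t)).
  { intro t. unfold w. replace (- (1/3) * psi t * (W0 * exp (- (1/3) * Psi t))) with
      (W0 * (exp (- (1/3) * Psi t) * (- (1/3) * psi t))) by ring.
    apply dscal. apply (dexp (fun x => - (1/3) * Psi x)). apply dscal. apply primf_d; auto. }
  assert (w0 : w 0 = W0) by (unfold w, Psi; rewrite primf_0; rewrite Rmult_0_r, exp_0; ring).
  assert (G0w : forall t, 0 <= t -> G0 t = w t ^ 3).
  { intros t Ht.
    rewrite (linear_ode G0 (fun t => - psi t) (fun t => - Psi t) CG0) ; auto.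
    - unfold w. rewrite Rpow_mult_distr, W0_cube, HG0. f_equal. simpl. rewrite Rmult_1_r, <- !exp_plus. f_equal.
      unfold Psi at 2. rewrite primf_0. lra.
    - intro x. apply continuity_pt_opp. apply primf_c; auto.
    - intros x Hx. apply dopp. apply primf_d; auto.
    - intros x Hx. unfold psi. replace (- (beta * pp (G1 x) (G2 x) (G3 x) * G0 x ^ 2) * G0 x) with
      (- beta * pp (G1 x) (G2 x) (G3 x) * G0 x ^ 3) by ring. apply DG; auto. }
  set (kk := fun t => beta * w t ^ 2).
  assert (Ckk : continuity kk) by (unfold kk; ctac).
  set (sg := primf kk).
  assert (sg0 : sg 0 = 0) by apply primf_0.
  assert (Dsg : forall t, derivable_pt_lim sg t (kk t)) by (apply primf_d; auto).
  assert (Csg : continuity sg) by (apply primf_c; auto).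
  assert (sgpos : forall t, 0 < t -> 0 < sg t).
  { intros t Ht. rewrite <- sg0. apply (smono sg kk 0); auto; try lra. intros x _; split; auto.
    unfold kk. apply Rmult_lt_0_compat. apply beta_pos. apply pow_lt; auto. }
  assert (U : forall t, 0 <= t -> w t * G2 t = B (sg t) /\ w t * G3 t = C (sg t)).
  { apply (uniq Dd kk (fun t => w t * G2 t) (fun t => w t * G3 t) (fun t => B (sg t)) (fun t => C (sg t))); auto.
    - apply cmult; auto.
    - apply cmult; auto.
    - intro x. apply (continuity_pt_comp sg B); auto. apply B_cont.
    - intro x. apply (continuity_pt_comp sg C); auto. apply C_cont.
    - intros t Ht. destruct (BC_pos (sg t)). repeat split; auto; apply Rmult_lt_0_compat; auto.
    - rewrite w0, HG2, sg0, B0. auto.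
    - rewrite w0, HG3, sg0, C0. auto.
    - intros t Ht. destruct (DG t Ht) as [d0 [d1 [d2 d3]]]. destruct (BC_der (sg t) (sgpos t Ht)) as [db dc].
      assert (Ht' : 0 <= t) by lra.
      repeat split.
      + unfold kk. rewrite <- (alg_Y1 beta (w t) (G0 t) (G1 t) (G2 t) (G3 t) Dd (Pw t) (P2 t Ht') (P3 t Ht') (G0w t Ht') (eq_sym (Prod t Ht'))).
        apply (dmult w G2). apply Dw. apply d2.
      + unfold kk. rewrite <- (alg_Y2 beta (w t) (G0 t) (G1 t) (G2 t) (G3 t) Dd (Pw t) (P2 t Ht') (P3 t Ht') (G0w t Ht') (eq_sym (Prod t Ht'))).
        apply (dmult w G3). apply Dw. apply d3.
      + rewrite Rmult_comm. apply (dcomp sg B); auto.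
      + rewrite Rmult_comm. apply (dcomp sg C); auto. }
  assert (AbE : forall t, 0 <= t -> Ab (sg t) = w t * G1 t).
  { intros t Ht. destruct (U t Ht) as [u1 u2]. unfold Ab. rewrite <- u1, <- u2, <- (Prod t Ht), G0w by auto.
    pose proof (Pw t). pose proof (P2 t Ht). pose proof (P3 t Ht). field. lra. }
  assert (wE : forall t, 0 <= t -> w t = W0 * exp (- (1/3) * Phi (sg t))).
  { intros t Ht.
    rewrite (linear_ode w (fun t => - (1/3) * psi t) (fun t => - (1/3) * Phi (sg t)) Cw); auto.
    - rewrite w0, sg0, Phi_0. f_equal. f_equal. ring.
    - intro x. apply continuity_pt_mult. apply continuity_pt_const; intros ? ?; auto.
      apply (continuity_pt_comp sg Phi); auto. apply Phi_cont.
    - intros x Hx. replace (- (1/3) * psi x) with (- (1/3) * (Pi (sg x) * kk x)).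
      apply dscal. apply (dcomp sg Phi); auto. apply Phi_d.
      unfold Pi. rewrite AbE by lra. destruct (U x ltac:(lra)) as [u1 u2]. rewrite <- u1, <- u2.
      unfold kk, psi. rewrite G0w by lra. unfold pp. ring. }
  exists sg, w. split.
  - intros t Ht. set (Q := fun t => T (sg t) - t).
    assert (Q t = Q 0).
    { apply const0; auto.
      - unfold Q. apply cminus. intro x. apply (continuity_pt_comp sg T); auto. apply T_cont.
        intro x; apply derivable_continuous_pt, derivable_pt_id.
      - intros x Hx. unfold Q. replace 0 with (Td (sg x) * kk x - 1).
        apply dminus. apply (dcomp sg T); auto. apply T_d. apply derivable_pt_lim_id.
        unfold Td, kk. rewrite wE by lra. pose proof W0_pos. pose proof beta_pos.
        replace ((W0 * exp (- (1 / 3) * Phi (sg x))) ^ 2) with (W0 ^ 2 * / exp (2/3 * Phi (sg x))).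
        field. split. apply Rgt_not_eq, exp_pos. lra.
        rewrite <- exp_Ropp. replace (- (2/3 * Phi (sg x))) with
          (- (1/3) * Phi (sg x) + - (1/3) * Phi (sg x)) by lra. rewrite exp_plus. ring. }
    unfold Q in H. rewrite sg0, T_0 in H. lra.
  - intros t Ht. destruct (EG t Ht) as [e0 [e1 [e2 e3]]]. destruct (U t Ht) as [u1 u2].
    pose proof (Pw t). repeat split.
    + apply wE; auto.
    + rewrite <- e0. apply G0w; auto.
    + rewrite <- e1, AbE by auto. field. lra.
    + rewrite <- e2, <- u1. field. lra.
    + rewrite <- e3, <- u2. field. lra.
Qed.

Definition kap := beta * W0 ^ 2.
Lemma kap_pos : 0 < kap.
Proof. unfold kap. apply Rmult_lt_0_compat. apply beta_pos. apply pow_lt, W0_pos. Qed.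

Lemma inv_ex t : exists s, (0 <= t -> T s = t /\ 0 <= s <= kap * t) /\ (t < 0 -> s = 0).
Proof.
  destruct (Rle_lt_dec 0 t) as [Ht|Ht].
  - pose proof kap_pos.
    assert (Hc : continuity (fun s => T s - t)) by (apply cminus; [apply T_cont| apply cconst]).
    destruct (IVT_cor (fun s => T s - t) 0 (kap * t) Hc) as [z [Hz Ez]].
    + apply Rmult_le_pos; lra.
    + rewrite T_0. pose proof (T_lower (kap * t) ltac:(apply Rmult_le_pos; lra)) as HT.
      change (beta * W0 ^ 2) with kap in HT. replace (kap * t / kap) with t in HT by (field; lra).
      nra.
    + exists z. split; intros; [split; [lra| lra] | lra].
  - exists 0. split; intros; lra.
Qed.

Definition sgI (t : R) : R := proj1_sig (constructive_indefinite_description _ (inv_ex t)).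
Lemma sgI_spec t : (0 <= t -> T (sgI t) = t /\ 0 <= sgI t <= kap * t) /\ (t < 0 -> sgI t = 0).
Proof. unfold sgI. destruct (constructive_indefinite_description _ (inv_ex t)) as [s Hs]. exact Hs. Qed.

Lemma sgI_nonneg t : 0 <= sgI t.
Proof. destruct (sgI_spec t) as [A Bq]. destruct (Rle_lt_dec 0 t). apply A; auto. rewrite Bq; auto; lra. Qed.
Lemma sgI_T t : 0 <= t -> T (sgI t) = t.
Proof. intros; apply sgI_spec; auto. Qed.
Lemma sgI_0 : sgI 0 = 0.
Proof. destruct (proj1 (sgI_spec 0) (Rle_refl 0)). lra. Qed.
Lemma sgI_pos t : 0 < t -> 0 < sgI t.
Proof.
  intros Ht. destruct (Req_dec (sgI t) 0) as [E|E].
  - pose proof (sgI_T t ltac:(lra)). rewrite E, T_0 in H. lra.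
  - pose proof (sgI_nonneg t). lra.
Qed.
Lemma sgI_le t s : 0 <= s -> T s >= t -> sgI t <= s.
Proof.
  intros Hs Ht. destruct (Rle_lt_dec 0 t) as [H|H].
  - destruct (Rle_lt_dec (sgI t) s); auto. pose proof (T_smono _ _ r). rewrite sgI_T in H4; auto. lra.
  - rewrite (proj2 (sgI_spec t) H); auto.
Qed.

Lemma sgI_cont : continuity sgI.
Proof.
  intro t. pose proof kap_pos. destruct (Rlt_or_le 0 t) as [Ht|Ht].
  - apply (continuity_pt_recip_interv T sgI 0 (sgI t + 1)).
    + pose proof (sgI_nonneg t); lra.
    + intros x y _ Hxy _. apply T_smono; auto.
    + intros x Hx _. unfold comp, id. apply sgI_T. rewrite T_0 in Hx; auto.
    + intros x Hx Hx'. rewrite T_0 in Hx. split. apply sgI_nonneg. apply sgI_le. pose proof (sgI_nonneg t); lra. lra.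
    + intros; apply T_cont.
    + rewrite T_0. split; auto. rewrite <- (sgI_T t) at 1 by lra. apply T_smono. lra.
  - apply cont_eps. intros eps Heps. exists (Rmin 1 (eps / kap)). split.
    + apply Rmin_pos; [lra| apply Rdiv_lt_0_compat; lra].
    + intros y Hy. assert (Hy2 : Rabs (y - t) < eps / kap) by (eapply Rlt_le_trans; [exact Hy| apply Rmin_r]).
      destruct (Rlt_or_le y 0) as [Hyn|Hyp].
      * rewrite (proj2 (sgI_spec y) Hyn).
        destruct (Rlt_or_le t 0) as [Htn|Ht0].
        -- rewrite (proj2 (sgI_spec t) Htn). unfold Rminus; rewrite Rplus_opp_r, Rabs_R0; lra.
        -- assert (t = 0) by lra. subst t. rewrite sgI_0. unfold Rminus; rewrite Rplus_opp_r, Rabs_R0; lra.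
      * destruct (proj1 (sgI_spec y) Hyp) as [_ [_ Hle]].
        assert (Hst : sgI t = 0) by (destruct (Rlt_or_le t 0) as [Htn|Ht0]; [apply (proj2 (sgI_spec t) Htn)| assert (t = 0) by lra; subst t; apply sgI_0]).
        rewrite Hst, Rminus_0_r. rewrite Rabs_right by (apply Rle_ge, sgI_nonneg).
        apply Rabs_def2 in Hy2.
        assert (Hyk : y < eps / kap) by lra.
        assert (kap * y < kap * (eps / kap)) by (apply Rmult_lt_compat_l; lra).
        replace (kap * (eps / kap)) with eps in * by (field; lra). lra.
Qed.

Lemma sgI_d t : 0 < t -> derivable_pt_lim sgI t (1 / Td (sgI t)).
Proof.
  intros Ht.
  assert (Prf : forall a, sgI 0 <= a <= sgI (t + 1) -> derivable_pt T a) by (intros a _; exists (Td a); apply T_d).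
  assert (Hincr : sgI 0 <= sgI t <= sgI (t + 1)).
  { rewrite sgI_0. split. apply sgI_nonneg. apply sgI_le. apply sgI_nonneg. rewrite sgI_T by lra. lra. }
  pose proof (derivable_pt_lim_recip_interv T sgI 0 (t + 1) t Prf (sgI_cont t) ltac:(lra) ltac:(lra) Hincr) as HH.
  rewrite (derive_pt_eq_0 _ _ _ (Prf (sgI t) Hincr) (T_d (sgI t))) in HH. apply HH.
  - intros x Hx. unfold comp, id. apply sgI_T; lra.
  - apply Rgt_not_eq, Td_pos.
Qed.

Lemma rc_of_cont f : continuity_pt f 0 -> right_cont_at0 f.
Proof.
  intros Hf eps Heps. destruct (eps_cont f 0 Hf eps Heps) as [d [Hd Hy]]. exists d. split; auto.
  intros t Ht. apply Hy. rewrite Rminus_0_r, Rabs_right; lra.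
Qed.

Lemma DdE s : Dd = Ab s * B s * C s.
Proof. unfold Ab. destruct (BC_pos s). field. split; lra. Qed.

Lemma part1 : exists g0 g1 g2 g3 : R -> R, S3_global_solution h0 h1 h2 h3 g0 g1 g2 g3.
Proof.
  set (w := fun t => W0 * exp (- (1/3) * Phi (sgI t))).
  assert (Cw : continuity w).
  { unfold w. apply cmult. apply cconst. intro x. apply cexp. apply continuity_pt_mult.
    apply continuity_pt_const; intros ? ?; auto. apply (continuity_pt_comp sgI Phi). apply sgI_cont. apply Phi_cont. }
  assert (Pw : forall t, 0 < w t) by (intro t; unfold w; apply Rmult_lt_0_compat; [apply W0_pos| apply exp_pos]).
  assert (w0 : w 0 = W0) by (unfold w; rewrite sgI_0, Phi_0, Rmult_0_r, exp_0; ring).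
  set (kk := fun t => beta * w t ^ 2).
  assert (Dsg : forall t, 0 < t -> derivable_pt_lim sgI t (kk t)).
  { intros t Ht. replace (kk t) with (1 / Td (sgI t)). apply sgI_d; auto.
    unfold kk, Td, w. pose proof W0_pos. pose proof beta_pos.
    replace ((W0 * exp (- (1 / 3) * Phi (sgI t))) ^ 2) with (W0 ^ 2 * / exp (2/3 * Phi (sgI t))).
    field. split. apply Rgt_not_eq, exp_pos. lra.
    rewrite <- exp_Ropp. replace (- (2/3 * Phi (sgI t))) with
      (- (1/3) * Phi (sgI t) + - (1/3) * Phi (sgI t)) by lra. rewrite exp_plus. ring. }
  assert (Dw : forall t, 0 < t -> derivable_pt_lim w t (- (1/3) * Pi (sgI t) * kk t * w t)).
  { intros t Ht. unfold w at 2. replace (- (1/3) * Pi (sgI t) * kk t * (W0 * exp (- (1/3) * Phi (sgI t)))) with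
      (W0 * (exp (- (1/3) * Phi (sgI t)) * (- (1/3) * (Pi (sgI t) * kk t)))) by ring.
    apply dscal. apply (dexp (fun x => - (1/3) * Phi (sgI x))). apply dscal. apply (dcomp sgI Phi); auto. apply Phi_d. }
  assert (CBs : continuity (fun t => B (sgI t))) by (intro x; apply (continuity_pt_comp sgI B); [apply sgI_cont| apply B_cont]).
  assert (CCs : continuity (fun t => C (sgI t))) by (intro x; apply (continuity_pt_comp sgI C); [apply sgI_cont| apply C_cont]).
  assert (CAs : continuity (fun t => Ab (sgI t))) by (intro x; apply (continuity_pt_comp sgI Ab); [apply sgI_cont| apply Ab_cont]).
  assert (Cinvw : continuity (fun t => / w t)) by (intro x; apply continuity_pt_inv; [apply Cw| apply Rgt_not_eq, Pw]).
  exists (fun t => w t ^ 3), (fun t => Ab (sgI t) / w t), (fun t => B (sgI t) / w t), (fun t => C (sgI t) / w t).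
  unfold S3_global_solution. cbv zeta. change (1 / (6 * (h0 * h1 * h2 * h3) ^ 2)) with beta.
  pose proof W0_pos as HW0. pose proof W0_cube as HW3.
  split; [|split; [|split; [|split; [|split; [|split; [|split; [|split]]]]]]].
  - cbv beta. rewrite w0; auto.
  - cbv beta. rewrite w0, sgI_0. unfold Ab. rewrite B0, C0. unfold Dd. rewrite <- HW3. field. lra.
  - cbv beta. rewrite w0, sgI_0, B0. field. lra.
  - cbv beta. rewrite w0, sgI_0, C0. field. lra.
  - apply rc_of_cont. apply cpow; auto.
  - apply rc_of_cont. unfold Rdiv. apply cmult; auto.
  - apply rc_of_cont. unfold Rdiv. apply cmult; auto.
  - apply rc_of_cont. unfold Rdiv. apply cmult; auto.
  - intros t Ht. set (s := sgI t). assert (Hs : 0 < s) by (apply sgI_pos; auto).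
    destruct (BC_der s Hs) as [DB DC]. destruct (BC_pos s) as [PB PC].
    pose proof (Pw t) as Pwt. pose proof (Ab_pos s) as PA.
    assert (DBs : derivable_pt_lim (fun t => B (sgI t)) t (F1 Dd (B s) (C s) * kk t)) by (apply (dcomp sgI B); auto).
    assert (DCs : derivable_pt_lim (fun t => C (sgI t)) t (F2 Dd (B s) (C s) * kk t)) by (apply (dcomp sgI C); auto).
    assert (Dinvw : derivable_pt_lim (fun t => / w t) t (- (- (1/3) * Pi s * kk t * w t) / (w t) ^ 2)).
    { apply dinv; auto. apply Rgt_not_eq; auto. }
    repeat split.
    + rewrite <- (alg_g0 beta (w t) (Ab s) (B s) (C s) Pwt). apply (dpow w). auto.
    + pose proof (alg_g1 beta (w t) (Ab s) (B s) (C s) Pwt PB PC) as E. rewrite <- DdE in E. rewrite <- E.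
      apply (dmult (fun t => Ab (sgI t)) (fun t => / w t)); auto.
      unfold Ab. apply (dscal Dd (fun t => / (B (sgI t) * C (sgI t)))).
      apply (dinv (fun y => B (sgI y) * C (sgI y))). apply Rgt_not_eq, Rmult_lt_0_compat; auto.
      apply (dmult (fun t => B (sgI t)) (fun t => C (sgI t))); auto.
    + pose proof (alg_g2 beta (w t) (Ab s) (B s) (C s) Pwt PB PC) as E. rewrite <- DdE in E. rewrite <- E.
      apply (dmult (fun t => B (sgI t)) (fun t => / w t)); auto.
    + pose proof (alg_g3 beta (w t) (Ab s) (B s) (C s) Pwt PB PC) as E. rewrite <- DdE in E. rewrite <- E.
      apply (dmult (fun t => C (sgI t)) (fun t => / w t)); auto.
Qed.

End Main.

Theorem theorem5p20 (h0 h1 h2 h3 : R) :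
  0 < h0 -> 0 < h1 -> 0 < h2 -> 0 < h3 ->
  h1 <= h2 -> h2 <= h3 ->
  in_D_S h0 h1 h2 h3 ->
  (exists g0 g1 g2 g3 : R -> R, S3_global_solution h0 h1 h2 h3 g0 g1 g2 g3) /\
  (forall g0 g1 g2 g3 : R -> R, S3_global_solution h0 h1 h2 h3 g0 g1 g2 g3 ->
     tends_to_at_infty g0 0 /\
     tends_to_infty g1 /\ tends_to_infty g2 /\ tends_to_infty g3 /\
     tends_to_at_infty (fun t => g2 t / g1 t) 4 /\
     tends_to_at_infty (fun t => g2 t / g3 t) 1).
Proof.
  intros H0 H1 H2 H3 _ _ HD. destruct HD as [b [c [HP [Hb Hc]]]].
  split.
  - eapply part1; eauto.
  - intros g0 g1 g2 g3 HS.
    destruct (part2 h0 h1 h2 h3 b c H0 H1 H2 H3 HP g0 g1 g2 g3 HS) as [sg [w [HT Hw]]].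
    apply (asymp h0 h1 h2 h3 b c H0 H1 H2 H3 HP Hb Hc sg w); auto.
Qed.
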